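(* Let $\eta$ be a homogeneous integrable 2-form of degree two on $\mathbb{C}^4$ with $d\eta\not\equiv0$, let $\nu=dz_1\wedge dz_2\wedge dz_3\wedge dz_4$, and let $X$ be the (linear, trace zero) vector field with $d\eta=i_X\nu$. Assume $\mathrm{codim}(\mathrm{Sing}(X))\ge3$. Then there is a linear vector field $Y$ with $\eta=i_Y i_X\nu$ and $[Y,X]=\lambda X$, where $\lambda=1-\mathrm{tr}(Y)$. Moreover: (a) if $X$ is not nilpotent, then $\lambda=0$ and $\mathrm{tr}(Y)=1$, so $[X,Y]=0$; (b) if $X$ is nilpotent and $\lambda\ne0$, then after a linear change of coordinates $X=z_1\frac{\partial}{\partial z_2}+z_2\frac{\partial}{\partial z_3}+z_3\frac{\partial}{\partial z_4}$ and $Y=\rho z_1\frac{\partial}{\partial z_1}+(\rho-\lambda)z_2\frac{\partial}{\partial z_2}+(\rho-2\lambda)z_3\frac{\partial}{\partial z_3}+(\rho-3\lambda)z_4\frac{\partial}{\partial z_4}$ for some $\rho\in\mathbb{C}$ with $4\rho-5\lambda=1$.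
   Context: A form is homogeneous of degree $m$ if its coefficients (in linear coordinates) are homogeneous polynomials of degree $m$. A linear vector field is identified with its matrix; $\mathrm{tr}$ denotes its trace. $\mathrm{Sing}(X)$ is the zero set of $X$. A holomorphic $q$-form $\eta$ is integrable if every point $p$ outside its zero set has a neighborhood $V$ with holomorphic 1-forms $\omega_1,\dots,\omega_q$ on $V$ such that $\eta|_V=\omega_1\wedge\cdots\wedge\omega_q$ and $d\omega_j\wedge\eta=0$ for all $j$. *)

(* Defs.v *)
From Stdlib Require Import Reals.
Open Scope R_scope.

Definition Cplx : Type := (R * R)%type.
Definition RtoC (r : R) : Cplx := (r, 0).
Definition Czero : Cplx := RtoC 0.
Definition Cone : Cplx := RtoC 1.
Definition Cadd (x y : Cplx) : Cplx := (fst x + fst y, snd x + snd y).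
Definition Copp (x : Cplx) : Cplx := (- fst x, - snd x).
Definition Csub (x y : Cplx) : Cplx := Cadd x (Copp y).
Definition Cmul (x y : Cplx) : Cplx :=
  (fst x * fst y - snd x * snd y, fst x * snd y + snd x * fst y).
Definition Cnorm (x : Cplx) : R := sqrt (fst x * fst x + snd x * snd x).

Declare Scope C_scope.
Delimit Scope C_scope with C.
Infix "+" := Cadd : C_scope.
Infix "-" := Csub : C_scope.
Infix "*" := Cmul : C_scope.
Notation "- x" := (Copp x) : C_scope.

(* Coordinates on Cplx^4: index type {1,2,3,4} = {i0,i1,i2,i3}          *)
Inductive I4 : Type := i0 | i1 | i2 | i3.

Definition idx (a : I4) : nat :=
  match a with i0 => 0 | i1 => 1 | i2 => 2 | i3 => 3 end%nat.

Definition sum4 (f : I4 -> Cplx) : Cplx := (f i0 + f i1 + f i2 + f i3)%C.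

Definition vec := I4 -> Cplx.
Definition mat := I4 -> I4 -> Cplx.    (* a linear vector field z |-> A z,
                                       A i j = coefficient of z_j in the
                                       i-th component *)

Definition mapply (A : mat) (z : vec) : vec := fun i => sum4 (fun j => (A i j * z j)%C).
Definition mmul (A B : mat) : mat := fun i j => sum4 (fun k => (A i k * B k j)%C).
Definition mid : mat := fun i j => if Nat.eqb (idx i) (idx j) then Cone else Czero.
Definition mzero : mat := fun _ _ => Czero.
Fixpoint mpow (A : mat) (n : nat) : mat :=
  match n with O => mid | S n => mmul A (mpow A n) end.
Definition trace (A : mat) : Cplx := sum4 (fun i => A i i).
Definition basis (a : I4) : vec := fun i => if Nat.eqb (idx i) (idx a) then Cone else Czero.

Definition nilpotent (A : mat) : Prop := exists n : nat, mpow A n = mzero.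

(* Lie bracket of linear vector fields Y(z) = Y z, X(z) = X z:
   [Y,X](z) = DX(z) Y(z) - DY(z) X(z) = (X Y - Y X) z. *)
Definition lie_lin (Y X : mat) : mat := fun i j => (mmul X Y i j - mmul Y X i j)%C.

Definition Sing (X : mat) : vec -> Prop := fun z => forall i, mapply X z i = Czero.

(* For a linear subspace S of Cplx^4 (such as Sing X),
   codim S >= 3  <->  dim S <= 1  <->  S is contained in a line. *)
Definition codim_ge3 (S : vec -> Prop) : Prop :=
  exists w : vec, forall z, S z -> exists c : Cplx, forall i, z i = (c * w i)%C.

(* Volume form nu = dz1 ^ dz2 ^ dz3 ^ dz4 via the Levi-Civita symbol *)
Definition inv_b (a b : I4) : nat := if Nat.ltb (idx b) (idx a) then 1%nat else 0%nat.
Definition distinct4 (a b c d : I4) : bool :=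
  negb (Nat.eqb (idx a) (idx b) || Nat.eqb (idx a) (idx c) || Nat.eqb (idx a) (idx d)
        || Nat.eqb (idx b) (idx c) || Nat.eqb (idx b) (idx d) || Nat.eqb (idx c) (idx d)).
Definition eps4 (a b c d : I4) : Cplx :=
  if distinct4 a b c d then
    if Nat.even (inv_b a b + inv_b a c + inv_b a d + inv_b b c + inv_b b d + inv_b c d)
    then Cone else Copp Cone
  else Czero.

Definition nu (u v w x : vec) : Cplx :=
  sum4 (fun a => sum4 (fun b => sum4 (fun c => sum4 (fun d =>
    (eps4 a b c d * u a * v b * w c * x d)%C)))).

(* Forms are given by their components on the coordinate basis:
   a 2-form eta is eta a b z = eta_z(e_a, e_b); a 3-form similarly. *)
Definition form2 := I4 -> I4 -> vec -> Cplx.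
Definition form3 := I4 -> I4 -> I4 -> vec -> Cplx.

Definition iX_nu (X : mat) : form3 :=
  fun a b c z => nu (mapply X z) (basis a) (basis b) (basis c).
(* i_Y i_X nu = (i_X nu)(Y, ., .) = nu(X, Y, ., .) *)
Definition iY_iX_nu (Y X : mat) : form2 :=
  fun a b z => nu (mapply X z) (mapply Y z) (basis a) (basis b).

(* Homogeneous 2-forms of degree two: components
   eta_{ab}(z) = sum_{k,l} c a b k l z_k z_l, with c antisymmetric in a b. *)
Definition coef2 := I4 -> I4 -> I4 -> I4 -> Cplx.
Definition quad_form (c : coef2) : form2 :=
  fun a b z => sum4 (fun k => sum4 (fun l => (c a b k l * z k * z l)%C)).
Definition alternating_coef (c : coef2) : Prop :=
  forall a b k l, c a b k l = Copp (c b a k l).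

(* partial derivative d/dz_a of the polynomial component eta_{bc} *)
Definition dquad (c : coef2) (a b d : I4) (z : vec) : Cplx :=
  sum4 (fun l => ((c b d a l + c b d l a) * z l)%C).
Definition d_quad (c : coef2) : form3 :=
  fun a b d z => (dquad c a b d z - dquad c b a d z + dquad c d a b z)%C.

Definition vadd (z w : vec) : vec := fun i => (z i + w i)%C.
Definition vscale (h : Cplx) (w : vec) : vec := fun i => (h * w i)%C.

Definition has_partial (f : vec -> Cplx) (i : I4) (z : vec) (l : Cplx) : Prop :=
  forall e : R, 0 < e -> exists dl : R, 0 < dl /\
    forall h : Cplx, 0 < Cnorm h < dl ->
      Cnorm (f (vadd z (vscale h (basis i))) - f z - h * l)%C <= e * Cnorm h.

Definition polydisc (p : vec) (r : R) : vec -> Prop :=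
  fun z => forall i, Cnorm (z i - p i)%C < r.
Definition open_set (V : vec -> Prop) : Prop :=
  forall z, V z -> exists r, 0 < r /\ forall w, polydisc z r w -> V w.

(* holomorphic on an open set = complex differentiable in each variable
   at each point (equivalent to holomorphy by Hartogs' theorem) *)
Definition holo_on (V : vec -> Prop) (f : vec -> Cplx) : Prop :=
  forall z, V z -> forall i, exists l, has_partial f i z l.

Definition form1 := I4 -> vec -> Cplx.
Definition wedge11 (w1 w2 : form1) : form2 :=
  fun a b z => (w1 a z * w2 b z - w1 b z * w2 a z)%C.
Definition wedge22 (al be : I4 -> I4 -> Cplx) : Cplx :=
  (RtoC (/4) * sum4 (fun a => sum4 (fun b => sum4 (fun c => sum4 (fun d =>
     eps4 a b c d * al a b * be c d)))))%C.

(* Integrability of a holomorphic 2-form (q = 2 case of the definition):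
   outside the zero set, locally eta = w1 ^ w2 with holomorphic 1-forms w_j
   satisfying d w_j ^ eta = 0.  Here (d w)(e_a,e_b) = d_a w_b - d_b w_a. *)
Definition integrable2 (eta : form2) : Prop :=
  forall p : vec, (exists a b, eta a b p <> Czero) ->
  exists (V : vec -> Prop) (w1 w2 : form1),
    open_set V /\ V p /\
    (forall a, holo_on V (w1 a)) /\ (forall a, holo_on V (w2 a)) /\
    (forall z, V z -> forall a b, eta a b z = wedge11 w1 w2 a b z) /\
    (forall z, V z -> forall (w : form1), (w = w1 \/ w = w2) ->
       forall D : I4 -> I4 -> Cplx,
       (forall a b, has_partial (w b) a z (D a b)) ->
       wedge22 (fun a b => D a b - D b a)%C (fun a b => eta a b z) = Czero).

Definition Nshift : mat := fun i j =>
  match i, j with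
  | i1, i0 | i2, i1 | i3, i2 => Cone
  | _, _ => Czero
  end.
Definition Ydiag (rho lam : Cplx) : mat := fun i j =>
  if Nat.eqb (idx i) (idx j)
  then (rho - RtoC (INR (idx i)) * lam)%C
  else Czero.

(* Main.v *)
Require Import Defs.
From Stdlib Require Import Reals Lra Lia Psatz Ring Field.
From Stdlib Require Import Classical ClassicalEpsilon FunctionalExtensionality.
Open Scope R_scope.


Lemma Cplx_eq (x y : Cplx) : fst x = fst y -> snd x = snd y -> x = y.
Proof. destruct x, y; simpl; intros; subst; reflexivity. Qed.

Definition Cinv (x : Cplx) : Cplx :=
  let n := fst x * fst x + snd x * snd x in (fst x / n, - snd x / n).
Definition Cdiv (x y : Cplx) : Cplx := Cmul x (Cinv y).

Lemma Cring_th : ring_theory Czero Cone Cadd Cmul Csub Copp (@eq Cplx).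
Proof.
  constructor; intros; apply Cplx_eq; unfold Cadd, Cmul, Csub, Copp, Czero, Cone, RtoC;
  destruct x; try destruct y; try destruct z; simpl; ring.
Qed.

Lemma Cone_neq_zero : Cone <> Czero.
Proof. unfold Cone, Czero, RtoC; intro H; injection H; lra. Qed.

Lemma Cfield_th : field_theory Czero Cone Cadd Cmul Csub Copp Cdiv Cinv (@eq Cplx).
Proof.
  constructor.
  - exact Cring_th.
  - exact Cone_neq_zero.
  - reflexivity.
  - intros [a b] H. apply Cplx_eq; unfold Cmul, Cinv, Cone, RtoC; simpl.
    + assert (a*a+b*b <> 0).
      { intro E. apply H. unfold Czero, RtoC. assert (a = 0) by nra. assert (b=0) by nra. subst; reflexivity. }
      field; auto.
    + assert (a*a+b*b <> 0).
      { intro E. apply H. unfold Czero, RtoC. assert (a = 0) by nra. assert (b=0) by nra. subst; reflexivity. }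
      field; auto.
Qed.

Add Field Cfield : Cfield_th.

Lemma test1 (a b c : Cplx) : Cmul (Cadd a b) c = Cadd (Cmul a c) (Cmul c b).
Proof. ring. Qed.

Local Open Scope C_scope.
Definition detv (u v w x : vec) : Cplx := (u i0 * v i1 * w i2 * x i3 - u i0 * v i1 * w i3 * x i2 - u i0 * v i2 * w i1 * x i3 + u i0 * v i2 * w i3 * x i1 + u i0 * v i3 * w i1 * x i2 - u i0 * v i3 * w i2 * x i1 - u i1 * v i0 * w i2 * x i3 + u i1 * v i0 * w i3 * x i2 + u i1 * v i2 * w i0 * x i3 - u i1 * v i2 * w i3 * x i0 - u i1 * v i3 * w i0 * x i2 + u i1 * v i3 * w i2 * x i0 + u i2 * v i0 * w i1 * x i3 - u i2 * v i0 * w i3 * x i1 - u i2 * v i1 * w i0 * x i3 + u i2 * v i1 * w i3 * x i0 + u i2 * v i3 * w i0 * x i1 - u i2 * v i3 * w i1 * x i0 - u i3 * v i0 * w i1 * x i2 + u i3 * v i0 * w i2 * x i1 + u i3 * v i1 * w i0 * x i2 - u i3 * v i1 * w i2 * x i0 - u i3 * v i2 * w i0 * x i1 + u i3 * v i2 * w i1 * x i0)%C.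
Definition nu2 (u v : vec) (a b : I4) : Cplx :=
  match a, b with
  | i0, i1 => (u i2 * v i3 - u i3 * v i2)%C
  | i0, i2 => (- (u i1 * v i3) + u i3 * v i1)%C
  | i0, i3 => (u i1 * v i2 - u i2 * v i1)%C
  | i1, i0 => (- (u i2 * v i3) + u i3 * v i2)%C
  | i1, i2 => (u i0 * v i3 - u i3 * v i0)%C
  | i1, i3 => (- (u i0 * v i2) + u i2 * v i0)%C
  | i2, i0 => (u i1 * v i3 - u i3 * v i1)%C
  | i2, i1 => (- (u i0 * v i3) + u i3 * v i0)%C
  | i2, i3 => (u i0 * v i1 - u i1 * v i0)%C
  | i3, i0 => (- (u i1 * v i2) + u i2 * v i1)%C
  | i3, i1 => (u i0 * v i2 - u i2 * v i0)%C
  | i3, i2 => (- (u i0 * v i1) + u i1 * v i0)%C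
  | _, _ => Czero end.
Definition nu3 (u : vec) (a b c : I4) : Cplx :=
  match a, b, c with
  | i0, i1, i2 => Copp (u i3)
  | i0, i1, i3 => u i2
  | i0, i2, i1 => u i3
  | i0, i2, i3 => Copp (u i1)
  | i0, i3, i1 => Copp (u i2)
  | i0, i3, i2 => u i1
  | i1, i0, i2 => u i3
  | i1, i0, i3 => Copp (u i2)
  | i1, i2, i0 => Copp (u i3)
  | i1, i2, i3 => u i0
  | i1, i3, i0 => u i2
  | i1, i3, i2 => Copp (u i0)
  | i2, i0, i1 => Copp (u i3)
  | i2, i0, i3 => u i1
  | i2, i1, i0 => u i3
  | i2, i1, i3 => Copp (u i0)
  | i2, i3, i0 => Copp (u i1)
  | i2, i3, i1 => u i0
  | i3, i0, i1 => u i2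
  | i3, i0, i2 => Copp (u i1)
  | i3, i1, i0 => Copp (u i2)
  | i3, i1, i2 => u i0
  | i3, i2, i0 => u i1
  | i3, i2, i1 => Copp (u i0)
  | _, _, _ => Czero end.

Lemma nu_detv u v w x : nu u v w x = detv u v w x.
Proof. unfold nu, sum4, detv, Defs.eps4. simpl. ring. Qed.
Lemma nu2_ok (u v : vec) a b : nu u v (basis a) (basis b) = nu2 u v a b.
Proof. rewrite nu_detv. destruct a, b; unfold detv, basis; simpl; ring. Qed.
Lemma nu3_ok (u : vec) a b c : nu u (basis a) (basis b) (basis c) = nu3 u a b c.
Proof. rewrite nu_detv. destruct a, b, c; unfold detv, basis; simpl; ring. Qed.


Fixpoint Cn (n : nat) : Cplx := match n with O => Czero | S m => Cone + Cn m end.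

Definition calt (cu : coef2) : coef2 := fun a b k l =>
  if Nat.ltb (idx a) (idx b) then cu a b k l
  else if Nat.ltb (idx b) (idx a) then Copp (cu b a k l) else Czero.

Definition Sym6 (T : I4 -> I4 -> I4 -> Cplx) k l m :=
  T k l m + T k m l + T l k m + T l m k + T m k l + T m l k.

Definition Hterm (J : mat) (c : coef2) b k l m :=
  Sym6 (fun k l m => sum4 (fun a => J a k * c a b l m)) k l m.

Definition J3 : mat := fun i j =>
  match i, j with
  | i0, i0 | i1, i1 | i2, i2 => Cone
  | _, _ => Czero end.
Definition Y2_J4 (cu : coef2) : mat := fun i j =>
  match i, j with
  | i0, i0 => (Copp (Cn 6) * cu i1 i2 i0 i3 + Copp (Cn 6) * cu i1 i2 i3 i0)%C
  | i0, i1 => (Copp (Cn 6) * cu i2 i3 i1 i1)%C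
  | i0, i2 => (Copp (Cn 6) * cu i2 i3 i1 i2 + Copp (Cn 6) * cu i2 i3 i2 i1)%C
  | i0, i3 => (Copp (Cn 6) * cu i2 i3 i1 i3 + Copp (Cn 6) * cu i2 i3 i3 i1)%C
  | i1, i0 => (Cn 6 * cu i2 i3 i0 i0)%C
  | i1, i1 => (Copp (Cn 6) * cu i1 i2 i0 i3 + Copp (Cn 6) * cu i1 i2 i3 i0 + Cn 6 * cu i2 i3 i0 i1 + Cn 6 * cu i2 i3 i1 i0)%C
  | i1, i2 => (Cn 6 * cu i2 i3 i0 i2 + Cn 6 * cu i2 i3 i2 i0)%C
  | i1, i3 => (Cn 6 * cu i2 i3 i0 i3 + Cn 6 * cu i2 i3 i3 i0)%C
  | i2, i0 => (Copp (Cn 6) * cu i1 i3 i0 i0)%C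
  | i2, i1 => (Copp (Cn 6) * cu i1 i3 i0 i1 + Copp (Cn 6) * cu i1 i3 i1 i0)%C
  | i2, i2 => (Copp (Cn 6) * cu i1 i2 i0 i3 + Copp (Cn 6) * cu i1 i2 i3 i0 + Copp (Cn 6) * cu i1 i3 i0 i2 + Copp (Cn 6) * cu i1 i3 i2 i0)%C
  | i2, i3 => (Copp (Cn 6) * cu i1 i3 i0 i3 + Copp (Cn 6) * cu i1 i3 i3 i0)%C
  | i3, i0 => (Cn 6 * cu i1 i2 i0 i0)%C
  | i3, i1 => (Cn 6 * cu i1 i2 i0 i1 + Cn 6 * cu i1 i2 i1 i0)%C
  | i3, i2 => (Cn 6 * cu i1 i2 i0 i2 + Cn 6 * cu i1 i2 i2 i0)%C
  | i3, i3 => (Czero)%C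
  end.
Definition D_J4 : nat := 6.
Lemma cert_J4 (cu : coef2) (HT : forall b k l m, Hterm mid (calt cu) b k l m = Czero) :
  forall a b z, (Cn D_J4 * quad_form (calt cu) a b z = nu2 (mapply mid z) (mapply (Y2_J4 cu) z) a b)%C.
Proof.
  intros a b z. destruct a, b.
  - transitivity (nu2 (mapply mid z) (mapply (Y2_J4 cu) z) i0 i0 + (Czero))%C.
    + unfold D_J4, quad_form, nu2, mapply, Y2_J4, Hterm, Sym6, calt, mid, sum4; simpl; ring.
    + rewrite ?HT; ring.
  - transitivity (nu2 (mapply mid z) (mapply (Y2_J4 cu) z) i0 i1 + ((Copp (Cn 3) * (z i0 * z i0)) * Hterm mid (calt cu) i0 i0 i0 i1 + (Copp (Cn 3) * (z i0 * z i1)) * Hterm mid (calt cu) i0 i0 i1 i1 + (Copp (Cn 1) * (z i1 * z i1)) * Hterm mid (calt cu) i0 i1 i1 i1 + (Cn 3 * (z i0 * z i2)) * Hterm mid (calt cu) i1 i0 i0 i2 + (Cn 3 * (z i0 * z i3)) * Hterm mid (calt cu) i1 i0 i0 i3 + (Cn 6 * (z i1 * z i2)) * Hterm mid (calt cu) i1 i0 i1 i2 + (Cn 6 * (z i1 * z i3)) * Hterm mid (calt cu) i1 i0 i1 i3 + (Cn 3 * (z i2 * z i2)) * Hterm mid (calt cu) i1 i0 i2 i2 + (Cn 6 * (z i2 * z i3)) * Hterm mid (calt cu) i1 i0 i2 i3 + (Cn 3 * (z i3 * z i3)) * Hterm mid (calt cu) i1 i0 i3 i3))%C.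
    + unfold D_J4, quad_form, nu2, mapply, Y2_J4, Hterm, Sym6, calt, mid, sum4; simpl; ring.
    + rewrite ?HT; ring.
  - transitivity (nu2 (mapply mid z) (mapply (Y2_J4 cu) z) i0 i2 + ((Copp (Cn 3) * (z i0 * z i0)) * Hterm mid (calt cu) i0 i0 i0 i2 + (Copp (Cn 6) * (z i0 * z i1)) * Hterm mid (calt cu) i0 i0 i1 i2 + (Copp (Cn 3) * (z i0 * z i2)) * Hterm mid (calt cu) i0 i0 i2 i2 + (Copp (Cn 3) * (z i1 * z i1)) * Hterm mid (calt cu) i0 i1 i1 i2 + (Copp (Cn 3) * (z i1 * z i2)) * Hterm mid (calt cu) i0 i1 i2 i2 + (Copp (Cn 1) * (z i2 * z i2)) * Hterm mid (calt cu) i0 i2 i2 i2 + (Copp (Cn 3) * (z i0 * z i1)) * Hterm mid (calt cu) i1 i0 i0 i2 + (Copp (Cn 6) * (z i1 * z i1)) * Hterm mid (calt cu) i1 i0 i1 i2 + (Copp (Cn 3) * (z i1 * z i2)) * Hterm mid (calt cu) i1 i0 i2 i2 + (Cn 3 * (z i0 * z i3)) * Hterm mid (calt cu) i2 i0 i0 i3 + (Cn 6 * (z i1 * z i3)) * Hterm mid (calt cu) i2 i0 i1 i3 + (Cn 6 * (z i2 * z i3)) * Hterm mid (calt cu) i2 i0 i2 i3 + (Cn 3 * (z i3 * z i3)) * Hterm mid (calt cu) i2 i0 i3 i3))%C.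
    + unfold D_J4, quad_form, nu2, mapply, Y2_J4, Hterm, Sym6, calt, mid, sum4; simpl; ring.
    + rewrite ?HT; ring.
  - transitivity (nu2 (mapply mid z) (mapply (Y2_J4 cu) z) i0 i3 + ((Copp (Cn 3) * (z i0 * z i0)) * Hterm mid (calt cu) i0 i0 i0 i3 + (Copp (Cn 6) * (z i0 * z i1)) * Hterm mid (calt cu) i0 i0 i1 i3 + (Copp (Cn 6) * (z i0 * z i2)) * Hterm mid (calt cu) i0 i0 i2 i3 + (Copp (Cn 3) * (z i0 * z i3)) * Hterm mid (calt cu) i0 i0 i3 i3 + (Copp (Cn 3) * (z i1 * z i1)) * Hterm mid (calt cu) i0 i1 i1 i3 + (Copp (Cn 6) * (z i1 * z i2)) * Hterm mid (calt cu) i0 i1 i2 i3 + (Copp (Cn 3) * (z i1 * z i3)) * Hterm mid (calt cu) i0 i1 i3 i3 + (Copp (Cn 3) * (z i2 * z i2)) * Hterm mid (calt cu) i0 i2 i2 i3 + (Copp (Cn 3) * (z i2 * z i3)) * Hterm mid (calt cu) i0 i2 i3 i3 + (Copp (Cn 1) * (z i3 * z i3)) * Hterm mid (calt cu) i0 i3 i3 i3 + (Copp (Cn 3) * (z i0 * z i1)) * Hterm mid (calt cu) i1 i0 i0 i3 + (Copp (Cn 6) * (z i1 * z i1)) * Hterm mid (calt cu) i1 i0 i1 i3 + (Copp (Cn 6) * (z i1 * z i2)) * Hterm mid (calt cu) i1 i0 i2 i3 + (Copp (Cn 3) * (z i1 * z i3)) * Hterm mid (calt cu) i1 i0 i3 i3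 + (Copp (Cn 3) * (z i0 * z i2)) * Hterm mid (calt cu) i2 i0 i0 i3 + (Copp (Cn 6) * (z i1 * z i2)) * Hterm mid (calt cu) i2 i0 i1 i3 + (Copp (Cn 6) * (z i2 * z i2)) * Hterm mid (calt cu) i2 i0 i2 i3 + (Copp (Cn 3) * (z i2 * z i3)) * Hterm mid (calt cu) i2 i0 i3 i3))%C.
    + unfold D_J4, quad_form, nu2, mapply, Y2_J4, Hterm, Sym6, calt, mid, sum4; simpl; ring.
    + rewrite ?HT; ring.
  - transitivity (nu2 (mapply mid z) (mapply (Y2_J4 cu) z) i1 i0 + ((Cn 3 * (z i0 * z i0)) * Hterm mid (calt cu) i0 i0 i0 i1 + (Cn 3 * (z i0 * z i1)) * Hterm mid (calt cu) i0 i0 i1 i1 + (Cn 1 * (z i1 * z i1)) * Hterm mid (calt cu) i0 i1 i1 i1 + (Copp (Cn 3) * (z i0 * z i2)) * Hterm mid (calt cu) i1 i0 i0 i2 + (Copp (Cn 3) * (z i0 * z i3)) * Hterm mid (calt cu) i1 i0 i0 i3 + (Copp (Cn 6) * (z i1 * z i2)) * Hterm mid (calt cu) i1 i0 i1 i2 + (Copp (Cn 6) * (z i1 * z i3)) * Hterm mid (calt cu) i1 i0 i1 i3 + (Copp (Cn 3) * (z i2 * z i2)) * Hterm mid (calt cu) i1 i0 i2 i2 + (Copp (Cn 6) * (z i2 * z i3)) * Hterm mid (calt cu) i1 i0 i2 i3 + (Copp (Cn 3) * (z i3 * z i3)) * Hterm mid (calt cu) i1 i0 i3 i3))%C.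
    + unfold D_J4, quad_form, nu2, mapply, Y2_J4, Hterm, Sym6, calt, mid, sum4; simpl; ring.
    + rewrite ?HT; ring.
  - transitivity (nu2 (mapply mid z) (mapply (Y2_J4 cu) z) i1 i1 + (Czero))%C.
    + unfold D_J4, quad_form, nu2, mapply, Y2_J4, Hterm, Sym6, calt, mid, sum4; simpl; ring.
    + rewrite ?HT; ring.
  - transitivity (nu2 (mapply mid z) (mapply (Y2_J4 cu) z) i1 i2 + ((Copp (Cn 3) * (z i1 * z i1)) * Hterm mid (calt cu) i1 i1 i1 i2 + (Copp (Cn 3) * (z i1 * z i2)) * Hterm mid (calt cu) i1 i1 i2 i2 + (Copp (Cn 1) * (z i2 * z i2)) * Hterm mid (calt cu) i1 i2 i2 i2 + (Cn 3 * (z i1 * z i3)) * Hterm mid (calt cu) i2 i1 i1 i3 + (Cn 6 * (z i2 * z i3)) * Hterm mid (calt cu) i2 i1 i2 i3 + (Cn 3 * (z i3 * z i3)) * Hterm mid (calt cu) i2 i1 i3 i3))%C.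
    + unfold D_J4, quad_form, nu2, mapply, Y2_J4, Hterm, Sym6, calt, mid, sum4; simpl; ring.
    + rewrite ?HT; ring.
  - transitivity (nu2 (mapply mid z) (mapply (Y2_J4 cu) z) i1 i3 + ((Copp (Cn 3) * (z i1 * z i1)) * Hterm mid (calt cu) i1 i1 i1 i3 + (Copp (Cn 6) * (z i1 * z i2)) * Hterm mid (calt cu) i1 i1 i2 i3 + (Copp (Cn 3) * (z i1 * z i3)) * Hterm mid (calt cu) i1 i1 i3 i3 + (Copp (Cn 3) * (z i2 * z i2)) * Hterm mid (calt cu) i1 i2 i2 i3 + (Copp (Cn 3) * (z i2 * z i3)) * Hterm mid (calt cu) i1 i2 i3 i3 + (Copp (Cn 1) * (z i3 * z i3)) * Hterm mid (calt cu) i1 i3 i3 i3 + (Copp (Cn 3) * (z i1 * z i2)) * Hterm mid (calt cu) i2 i1 i1 i3 + (Copp (Cn 6) * (z i2 * z i2)) * Hterm mid (calt cu) i2 i1 i2 i3 + (Copp (Cn 3) * (z i2 * z i3)) * Hterm mid (calt cu) i2 i1 i3 i3))%C.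
    + unfold D_J4, quad_form, nu2, mapply, Y2_J4, Hterm, Sym6, calt, mid, sum4; simpl; ring.
    + rewrite ?HT; ring.
  - transitivity (nu2 (mapply mid z) (mapply (Y2_J4 cu) z) i2 i0 + ((Cn 3 * (z i0 * z i0)) * Hterm mid (calt cu) i0 i0 i0 i2 + (Cn 6 * (z i0 * z i1)) * Hterm mid (calt cu) i0 i0 i1 i2 + (Cn 3 * (z i0 * z i2)) * Hterm mid (calt cu) i0 i0 i2 i2 + (Cn 3 * (z i1 * z i1)) * Hterm mid (calt cu) i0 i1 i1 i2 + (Cn 3 * (z i1 * z i2)) * Hterm mid (calt cu) i0 i1 i2 i2 + (Cn 1 * (z i2 * z i2)) * Hterm mid (calt cu) i0 i2 i2 i2 + (Cn 3 * (z i0 * z i1)) * Hterm mid (calt cu) i1 i0 i0 i2 + (Cn 6 * (z i1 * z i1)) * Hterm mid (calt cu) i1 i0 i1 i2 + (Cn 3 * (z i1 * z i2)) * Hterm mid (calt cu) i1 i0 i2 i2 + (Copp (Cn 3) * (z i0 * z i3)) * Hterm mid (calt cu) i2 i0 i0 i3 + (Copp (Cn 6) * (z i1 * z i3)) * Hterm mid (calt cu) i2 i0 i1 i3 + (Copp (Cn 6) * (z i2 * z i3)) * Hterm mid (calt cu) i2 i0 i2 i3 + (Copp (Cn 3) * (z i3 * z i3)) * Hterm mid (calt cu) i2 i0 i3 i3))%C.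
    + unfold D_J4, quad_form, nu2, mapply, Y2_J4, Hterm, Sym6, calt, mid, sum4; simpl; ring.
    + rewrite ?HT; ring.
  - transitivity (nu2 (mapply mid z) (mapply (Y2_J4 cu) z) i2 i1 + ((Cn 3 * (z i1 * z i1)) * Hterm mid (calt cu) i1 i1 i1 i2 + (Cn 3 * (z i1 * z i2)) * Hterm mid (calt cu) i1 i1 i2 i2 + (Cn 1 * (z i2 * z i2)) * Hterm mid (calt cu) i1 i2 i2 i2 + (Copp (Cn 3) * (z i1 * z i3)) * Hterm mid (calt cu) i2 i1 i1 i3 + (Copp (Cn 6) * (z i2 * z i3)) * Hterm mid (calt cu) i2 i1 i2 i3 + (Copp (Cn 3) * (z i3 * z i3)) * Hterm mid (calt cu) i2 i1 i3 i3))%C.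
    + unfold D_J4, quad_form, nu2, mapply, Y2_J4, Hterm, Sym6, calt, mid, sum4; simpl; ring.
    + rewrite ?HT; ring.
  - transitivity (nu2 (mapply mid z) (mapply (Y2_J4 cu) z) i2 i2 + (Czero))%C.
    + unfold D_J4, quad_form, nu2, mapply, Y2_J4, Hterm, Sym6, calt, mid, sum4; simpl; ring.
    + rewrite ?HT; ring.
  - transitivity (nu2 (mapply mid z) (mapply (Y2_J4 cu) z) i2 i3 + ((Copp (Cn 3) * (z i2 * z i2)) * Hterm mid (calt cu) i2 i2 i2 i3 + (Copp (Cn 3) * (z i2 * z i3)) * Hterm mid (calt cu) i2 i2 i3 i3 + (Copp (Cn 1) * (z i3 * z i3)) * Hterm mid (calt cu) i2 i3 i3 i3))%C.
    + unfold D_J4, quad_form, nu2, mapply, Y2_J4, Hterm, Sym6, calt, mid, sum4; simpl; ring.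
    + rewrite ?HT; ring.
  - transitivity (nu2 (mapply mid z) (mapply (Y2_J4 cu) z) i3 i0 + ((Cn 3 * (z i0 * z i0)) * Hterm mid (calt cu) i0 i0 i0 i3 + (Cn 6 * (z i0 * z i1)) * Hterm mid (calt cu) i0 i0 i1 i3 + (Cn 6 * (z i0 * z i2)) * Hterm mid (calt cu) i0 i0 i2 i3 + (Cn 3 * (z i0 * z i3)) * Hterm mid (calt cu) i0 i0 i3 i3 + (Cn 3 * (z i1 * z i1)) * Hterm mid (calt cu) i0 i1 i1 i3 + (Cn 6 * (z i1 * z i2)) * Hterm mid (calt cu) i0 i1 i2 i3 + (Cn 3 * (z i1 * z i3)) * Hterm mid (calt cu) i0 i1 i3 i3 + (Cn 3 * (z i2 * z i2)) * Hterm mid (calt cu) i0 i2 i2 i3 + (Cn 3 * (z i2 * z i3)) * Hterm mid (calt cu) i0 i2 i3 i3 + (Cn 1 * (z i3 * z i3)) * Hterm mid (calt cu) i0 i3 i3 i3 + (Cn 3 * (z i0 * z i1)) * Hterm mid (calt cu) i1 i0 i0 i3 + (Cn 6 * (z i1 * z i1)) * Hterm mid (calt cu) i1 i0 i1 i3 + (Cn 6 * (z i1 * z i2)) * Hterm mid (calt cu) i1 i0 i2 i3 + (Cn 3 * (z i1 * z i3)) * Hterm mid (calt cu) i1 i0 i3 i3 + (Cn 3 * (z i0 * z i2)) * Hterm mid (calt cu) i2 i0 i0 i3 + (Cn 6 * (z i1 * z i2)) * Hterm mid (calt cu) i2 i0 i1 i3 + (Cn 6 * (z i2 * z i2)) *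 Hterm mid (calt cu) i2 i0 i2 i3 + (Cn 3 * (z i2 * z i3)) * Hterm mid (calt cu) i2 i0 i3 i3))%C.
    + unfold D_J4, quad_form, nu2, mapply, Y2_J4, Hterm, Sym6, calt, mid, sum4; simpl; ring.
    + rewrite ?HT; ring.
  - transitivity (nu2 (mapply mid z) (mapply (Y2_J4 cu) z) i3 i1 + ((Cn 3 * (z i1 * z i1)) * Hterm mid (calt cu) i1 i1 i1 i3 + (Cn 6 * (z i1 * z i2)) * Hterm mid (calt cu) i1 i1 i2 i3 + (Cn 3 * (z i1 * z i3)) * Hterm mid (calt cu) i1 i1 i3 i3 + (Cn 3 * (z i2 * z i2)) * Hterm mid (calt cu) i1 i2 i2 i3 + (Cn 3 * (z i2 * z i3)) * Hterm mid (calt cu) i1 i2 i3 i3 + (Cn 1 * (z i3 * z i3)) * Hterm mid (calt cu) i1 i3 i3 i3 + (Cn 3 * (z i1 * z i2)) * Hterm mid (calt cu) i2 i1 i1 i3 + (Cn 6 * (z i2 * z i2)) * Hterm mid (calt cu) i2 i1 i2 i3 + (Cn 3 * (z i2 * z i3)) * Hterm mid (calt cu) i2 i1 i3 i3))%C.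
    + unfold D_J4, quad_form, nu2, mapply, Y2_J4, Hterm, Sym6, calt, mid, sum4; simpl; ring.
    + rewrite ?HT; ring.
  - transitivity (nu2 (mapply mid z) (mapply (Y2_J4 cu) z) i3 i2 + ((Cn 3 * (z i2 * z i2)) * Hterm mid (calt cu) i2 i2 i2 i3 + (Cn 3 * (z i2 * z i3)) * Hterm mid (calt cu) i2 i2 i3 i3 + (Cn 1 * (z i3 * z i3)) * Hterm mid (calt cu) i2 i3 i3 i3))%C.
    + unfold D_J4, quad_form, nu2, mapply, Y2_J4, Hterm, Sym6, calt, mid, sum4; simpl; ring.
    + rewrite ?HT; ring.
  - transitivity (nu2 (mapply mid z) (mapply (Y2_J4 cu) z) i3 i3 + (Czero))%C.
    + unfold D_J4, quad_form, nu2, mapply, Y2_J4, Hterm, Sym6, calt, mid, sum4; simpl; ring.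
    + rewrite ?HT; ring.
Qed.
Definition Y2_J3 (cu : coef2) : mat := fun i j =>
  match i, j with
  | i0, i0 => (Cn 6 * cu i1 i3 i0 i2 + Cn 6 * cu i1 i3 i2 i0)%C
  | i0, i1 => (Copp (Cn 6) * cu i2 i3 i1 i1)%C
  | i0, i2 => (Copp (Cn 6) * cu i2 i3 i1 i2 + Copp (Cn 6) * cu i2 i3 i2 i1)%C
  | i0, i3 => (Copp (Cn 6) * cu i2 i3 i1 i3 + Copp (Cn 6) * cu i2 i3 i3 i1)%C
  | i1, i0 => (Cn 6 * cu i2 i3 i0 i0)%C
  | i1, i1 => (Cn 6 * cu i1 i3 i0 i2 + Cn 6 * cu i1 i3 i2 i0 + Cn 6 * cu i2 i3 i0 i1 + Cn 6 * cu i2 i3 i1 i0)%C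
  | i1, i2 => (Cn 6 * cu i2 i3 i0 i2 + Cn 6 * cu i2 i3 i2 i0)%C
  | i1, i3 => (Cn 6 * cu i2 i3 i0 i3 + Cn 6 * cu i2 i3 i3 i0)%C
  | i2, i0 => (Copp (Cn 6) * cu i1 i3 i0 i0)%C
  | i2, i1 => (Copp (Cn 6) * cu i1 i3 i0 i1 + Copp (Cn 6) * cu i1 i3 i1 i0)%C
  | i2, i2 => (Czero)%C
  | i2, i3 => (Copp (Cn 6) * cu i1 i3 i0 i3 + Copp (Cn 6) * cu i1 i3 i3 i0)%C
  | i3, i0 => (Cn 6 * cu i1 i2 i0 i0)%C
  | i3, i1 => (Cn 6 * cu i1 i2 i0 i1 + Cn 6 * cu i1 i2 i1 i0)%C
  | i3, i2 => (Cn 6 * cu i1 i2 i0 i2 + Cn 6 * cu i1 i2 i2 i0)%C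
  | i3, i3 => (Cn 6 * cu i1 i2 i0 i3 + Cn 6 * cu i1 i2 i3 i0)%C
  end.
Definition D_J3 : nat := 6.
Lemma cert_J3 (cu : coef2) (HT : forall b k l m, Hterm J3 (calt cu) b k l m = Czero) :
  forall a b z, (Cn D_J3 * quad_form (calt cu) a b z = nu2 (mapply J3 z) (mapply (Y2_J3 cu) z) a b)%C.
Proof.
  intros a b z. destruct a, b.
  - transitivity (nu2 (mapply J3 z) (mapply (Y2_J3 cu) z) i0 i0 + (Czero))%C.
    + unfold D_J3, quad_form, nu2, mapply, Y2_J3, Hterm, Sym6, calt, J3, sum4; simpl; ring.
    + rewrite ?HT; ring.
  - transitivity (nu2 (mapply J3 z) (mapply (Y2_J3 cu) z) i0 i1 + ((Copp (Cn 3) * (z i0 * z i0)) * Hterm J3 (calt cu) i0 i0 i0 i1 + (Copp (Cn 3) * (z i0 * z i1)) * Hterm J3 (calt cu) i0 i0 i1 i1 + (Copp (Cn 6) * (z i0 * z i3)) * Hterm J3 (calt cu) i0 i0 i1 i3 + (Copp (Cn 1) * (z i1 * z i1)) * Hterm J3 (calt cu) i0 i1 i1 i1 + (Copp (Cn 3) * (z i1 * z i3)) * Hterm J3 (calt cu) i0 i1 i1 i3 + (Copp (Cn 3) * (z i3 * z i3)) * Hterm J3 (calt cu) i0 i1 i3 i3 + (Cn 3 * (z i0 * z i2)) * Hterm J3 (calt cu) i1 i0 i0 i2 + (Cn 6 * (z i1 * z i2)) * Hterm J3 (calt cu) i1 i0 i1 i2 + (Cn 3 * (z i2 * z i2)) *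 Hterm J3 (calt cu) i1 i0 i2 i2 + (Cn 6 * (z i2 * z i3)) * Hterm J3 (calt cu) i1 i0 i2 i3))%C.
    + unfold D_J3, quad_form, nu2, mapply, Y2_J3, Hterm, Sym6, calt, J3, sum4; simpl; ring.
    + rewrite ?HT; ring.
  - transitivity (nu2 (mapply J3 z) (mapply (Y2_J3 cu) z) i0 i2 + ((Copp (Cn 3) * (z i0 * z i0)) * Hterm J3 (calt cu) i0 i0 i0 i2 + (Copp (Cn 6) * (z i0 * z i1)) * Hterm J3 (calt cu) i0 i0 i1 i2 + (Copp (Cn 3) * (z i0 * z i2)) * Hterm J3 (calt cu) i0 i0 i2 i2 + (Copp (Cn 6) * (z i0 * z i3)) * Hterm J3 (calt cu) i0 i0 i2 i3 + (Copp (Cn 3) * (z i1 * z i1)) * Hterm J3 (calt cu) i0 i1 i1 i2 + (Copp (Cn 3) * (z i1 * z i2)) * Hterm J3 (calt cu) i0 i1 i2 i2 + (Copp (Cn 6) * (z i1 * z i3)) * Hterm J3 (calt cu) i0 i1 i2 i3 + (Copp (Cn 1) * (z i2 * z i2)) * Hterm J3 (calt cu) i0 i2 i2 i2 + (Copp (Cn 3) * (z i2 * z i3)) * Hterm J3 (calt cu) i0 i2 i2 i3 + (Copp (Cn 3) * (z i3 * z i3)) * Hterm J3 (calt cu) i0 i2 i3 i3 + (Copp (Cn 3) * (z i0 * z i1)) * Hterm J3 (calt cu) i1 i0 i0 i2 + (Copp (Cn 6) * (z i1 * z i1)) * Hterm J3 (calt cu) i1 i0 i1 i2 + (Copp (Cn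 3) * (z i1 * z i2)) * Hterm J3 (calt cu) i1 i0 i2 i2 + (Copp (Cn 6) * (z i1 * z i3)) * Hterm J3 (calt cu) i1 i0 i2 i3))%C.
    + unfold D_J3, quad_form, nu2, mapply, Y2_J3, Hterm, Sym6, calt, J3, sum4; simpl; ring.
    + rewrite ?HT; ring.
  - transitivity (nu2 (mapply J3 z) (mapply (Y2_J3 cu) z) i0 i3 + ((Cn 1 * (z i0 * z i0)) * Hterm J3 (calt cu) i3 i0 i0 i0 + (Cn 3 * (z i0 * z i1)) * Hterm J3 (calt cu) i3 i0 i0 i1 + (Cn 3 * (z i0 * z i2)) * Hterm J3 (calt cu) i3 i0 i0 i2 + (Cn 3 * (z i0 * z i3)) * Hterm J3 (calt cu) i3 i0 i0 i3 + (Cn 3 * (z i1 * z i1)) * Hterm J3 (calt cu) i3 i0 i1 i1 + (Cn 6 * (z i1 * z i2)) * Hterm J3 (calt cu) i3 i0 i1 i2 + (Cn 6 * (z i1 * z i3)) * Hterm J3 (calt cu) i3 i0 i1 i3 + (Cn 3 * (z i2 * z i2)) * Hterm J3 (calt cu) i3 i0 i2 i2 + (Cn 6 * (z i2 * z i3)) * Hterm J3 (calt cu) i3 i0 i2 i3 + (Cn 3 * (z i3 * z i3)) * Hterm J3 (calt cu) i3 i0 i3 i3))%C.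
    + unfold D_J3, quad_form, nu2, mapply, Y2_J3, Hterm, Sym6, calt, J3, sum4; simpl; ring.
    + rewrite ?HT; ring.
  - transitivity (nu2 (mapply J3 z) (mapply (Y2_J3 cu) z) i1 i0 + ((Cn 3 * (z i0 * z i0)) * Hterm J3 (calt cu) i0 i0 i0 i1 + (Cn 3 * (z i0 * z i1)) * Hterm J3 (calt cu) i0 i0 i1 i1 + (Cn 6 * (z i0 * z i3)) * Hterm J3 (calt cu) i0 i0 i1 i3 + (Cn 1 * (z i1 * z i1)) * Hterm J3 (calt cu) i0 i1 i1 i1 + (Cn 3 * (z i1 * z i3)) * Hterm J3 (calt cu) i0 i1 i1 i3 + (Cn 3 * (z i3 * z i3)) * Hterm J3 (calt cu) i0 i1 i3 i3 + (Copp (Cn 3) * (z i0 * z i2)) * Hterm J3 (calt cu) i1 i0 i0 i2 + (Copp (Cn 6) * (z i1 * z i2)) * Hterm J3 (calt cu) i1 i0 i1 i2 + (Copp (Cn 3) * (z i2 * z i2)) * Hterm J3 (calt cu) i1 i0 i2 i2 + (Copp (Cn 6) * (z i2 * z i3)) * Hterm J3 (calt cu) i1 i0 i2 i3))%C.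
    + unfold D_J3, quad_form, nu2, mapply, Y2_J3, Hterm, Sym6, calt, J3, sum4; simpl; ring.
    + rewrite ?HT; ring.
  - transitivity (nu2 (mapply J3 z) (mapply (Y2_J3 cu) z) i1 i1 + (Czero))%C.
    + unfold D_J3, quad_form, nu2, mapply, Y2_J3, Hterm, Sym6, calt, J3, sum4; simpl; ring.
    + rewrite ?HT; ring.
  - transitivity (nu2 (mapply J3 z) (mapply (Y2_J3 cu) z) i1 i2 + ((Copp (Cn 3) * (z i1 * z i1)) * Hterm J3 (calt cu) i1 i1 i1 i2 + (Copp (Cn 3) * (z i1 * z i2)) * Hterm J3 (calt cu) i1 i1 i2 i2 + (Copp (Cn 6) * (z i1 * z i3)) * Hterm J3 (calt cu) i1 i1 i2 i3 + (Copp (Cn 1) * (z i2 * z i2)) * Hterm J3 (calt cu) i1 i2 i2 i2 + (Copp (Cn 3) * (z i2 * z i3)) * Hterm J3 (calt cu) i1 i2 i2 i3 + (Copp (Cn 3) * (z i3 * z i3)) * Hterm J3 (calt cu) i1 i2 i3 i3))%C.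
    + unfold D_J3, quad_form, nu2, mapply, Y2_J3, Hterm, Sym6, calt, J3, sum4; simpl; ring.
    + rewrite ?HT; ring.
  - transitivity (nu2 (mapply J3 z) (mapply (Y2_J3 cu) z) i1 i3 + ((Cn 1 * (z i1 * z i1)) * Hterm J3 (calt cu) i3 i1 i1 i1 + (Cn 3 * (z i1 * z i2)) * Hterm J3 (calt cu) i3 i1 i1 i2 + (Cn 3 * (z i1 * z i3)) * Hterm J3 (calt cu) i3 i1 i1 i3 + (Cn 3 * (z i2 * z i2)) * Hterm J3 (calt cu) i3 i1 i2 i2 + (Cn 6 * (z i2 * z i3)) * Hterm J3 (calt cu) i3 i1 i2 i3 + (Cn 3 * (z i3 * z i3)) * Hterm J3 (calt cu) i3 i1 i3 i3))%C.
    + unfold D_J3, quad_form, nu2, mapply, Y2_J3, Hterm, Sym6, calt, J3, sum4; simpl; ring.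
    + rewrite ?HT; ring.
  - transitivity (nu2 (mapply J3 z) (mapply (Y2_J3 cu) z) i2 i0 + ((Cn 3 * (z i0 * z i0)) * Hterm J3 (calt cu) i0 i0 i0 i2 + (Cn 6 * (z i0 * z i1)) * Hterm J3 (calt cu) i0 i0 i1 i2 + (Cn 3 * (z i0 * z i2)) * Hterm J3 (calt cu) i0 i0 i2 i2 + (Cn 6 * (z i0 * z i3)) * Hterm J3 (calt cu) i0 i0 i2 i3 + (Cn 3 * (z i1 * z i1)) * Hterm J3 (calt cu) i0 i1 i1 i2 + (Cn 3 * (z i1 * z i2)) * Hterm J3 (calt cu) i0 i1 i2 i2 + (Cn 6 * (z i1 * z i3)) * Hterm J3 (calt cu) i0 i1 i2 i3 + (Cn 1 * (z i2 * z i2)) * Hterm J3 (calt cu) i0 i2 i2 i2 + (Cn 3 * (z i2 * z i3)) * Hterm J3 (calt cu) i0 i2 i2 i3 + (Cn 3 * (z i3 * z i3)) * Hterm J3 (calt cu) i0 i2 i3 i3 + (Cn 3 * (z i0 * z i1)) * Hterm J3 (calt cu) i1 i0 i0 i2 + (Cn 6 * (z i1 * z i1)) * Hterm J3 (calt cu) i1 i0 i1 i2 + (Cn 3 * (z i1 * z i2)) * Hterm J3 (calt cu) i1 i0 i2 i2 + (Cn 6 * (z i1 * z i3)) * Hterm J3 (calt cu) i1 i0 i2 i3))%C.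
    + unfold D_J3, quad_form, nu2, mapply, Y2_J3, Hterm, Sym6, calt, J3, sum4; simpl; ring.
    + rewrite ?HT; ring.
  - transitivity (nu2 (mapply J3 z) (mapply (Y2_J3 cu) z) i2 i1 + ((Cn 3 * (z i1 * z i1)) * Hterm J3 (calt cu) i1 i1 i1 i2 + (Cn 3 * (z i1 * z i2)) * Hterm J3 (calt cu) i1 i1 i2 i2 + (Cn 6 * (z i1 * z i3)) * Hterm J3 (calt cu) i1 i1 i2 i3 + (Cn 1 * (z i2 * z i2)) * Hterm J3 (calt cu) i1 i2 i2 i2 + (Cn 3 * (z i2 * z i3)) * Hterm J3 (calt cu) i1 i2 i2 i3 + (Cn 3 * (z i3 * z i3)) * Hterm J3 (calt cu) i1 i2 i3 i3))%C.
    + unfold D_J3, quad_form, nu2, mapply, Y2_J3, Hterm, Sym6, calt, J3, sum4; simpl; ring.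
    + rewrite ?HT; ring.
  - transitivity (nu2 (mapply J3 z) (mapply (Y2_J3 cu) z) i2 i2 + (Czero))%C.
    + unfold D_J3, quad_form, nu2, mapply, Y2_J3, Hterm, Sym6, calt, J3, sum4; simpl; ring.
    + rewrite ?HT; ring.
  - transitivity (nu2 (mapply J3 z) (mapply (Y2_J3 cu) z) i2 i3 + ((Cn 1 * (z i2 * z i2)) * Hterm J3 (calt cu) i3 i2 i2 i2 + (Cn 3 * (z i2 * z i3)) * Hterm J3 (calt cu) i3 i2 i2 i3 + (Cn 3 * (z i3 * z i3)) * Hterm J3 (calt cu) i3 i2 i3 i3))%C.
    + unfold D_J3, quad_form, nu2, mapply, Y2_J3, Hterm, Sym6, calt, J3, sum4; simpl; ring.
    + rewrite ?HT; ring.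
  - transitivity (nu2 (mapply J3 z) (mapply (Y2_J3 cu) z) i3 i0 + ((Copp (Cn 1) * (z i0 * z i0)) * Hterm J3 (calt cu) i3 i0 i0 i0 + (Copp (Cn 3) * (z i0 * z i1)) * Hterm J3 (calt cu) i3 i0 i0 i1 + (Copp (Cn 3) * (z i0 * z i2)) * Hterm J3 (calt cu) i3 i0 i0 i2 + (Copp (Cn 3) * (z i0 * z i3)) * Hterm J3 (calt cu) i3 i0 i0 i3 + (Copp (Cn 3) * (z i1 * z i1)) * Hterm J3 (calt cu) i3 i0 i1 i1 + (Copp (Cn 6) * (z i1 * z i2)) * Hterm J3 (calt cu) i3 i0 i1 i2 + (Copp (Cn 6) * (z i1 * z i3)) * Hterm J3 (calt cu) i3 i0 i1 i3 + (Copp (Cn 3) * (z i2 * z i2)) * Hterm J3 (calt cu) i3 i0 i2 i2 + (Copp (Cn 6) * (z i2 * z i3)) * Hterm J3 (calt cu) i3 i0 i2 i3 + (Copp (Cn 3) * (z i3 * z i3)) * Hterm J3 (calt cu) i3 i0 i3 i3))%C.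
    + unfold D_J3, quad_form, nu2, mapply, Y2_J3, Hterm, Sym6, calt, J3, sum4; simpl; ring.
    + rewrite ?HT; ring.
  - transitivity (nu2 (mapply J3 z) (mapply (Y2_J3 cu) z) i3 i1 + ((Copp (Cn 1) * (z i1 * z i1)) * Hterm J3 (calt cu) i3 i1 i1 i1 + (Copp (Cn 3) * (z i1 * z i2)) * Hterm J3 (calt cu) i3 i1 i1 i2 + (Copp (Cn 3) * (z i1 * z i3)) * Hterm J3 (calt cu) i3 i1 i1 i3 + (Copp (Cn 3) * (z i2 * z i2)) * Hterm J3 (calt cu) i3 i1 i2 i2 + (Copp (Cn 6) * (z i2 * z i3)) * Hterm J3 (calt cu) i3 i1 i2 i3 + (Copp (Cn 3) * (z i3 * z i3)) * Hterm J3 (calt cu) i3 i1 i3 i3))%C.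
    + unfold D_J3, quad_form, nu2, mapply, Y2_J3, Hterm, Sym6, calt, J3, sum4; simpl; ring.
    + rewrite ?HT; ring.
  - transitivity (nu2 (mapply J3 z) (mapply (Y2_J3 cu) z) i3 i2 + ((Copp (Cn 1) * (z i2 * z i2)) * Hterm J3 (calt cu) i3 i2 i2 i2 + (Copp (Cn 3) * (z i2 * z i3)) * Hterm J3 (calt cu) i3 i2 i2 i3 + (Copp (Cn 3) * (z i3 * z i3)) * Hterm J3 (calt cu) i3 i2 i3 i3))%C.
    + unfold D_J3, quad_form, nu2, mapply, Y2_J3, Hterm, Sym6, calt, J3, sum4; simpl; ring.
    + rewrite ?HT; ring.
  - transitivity (nu2 (mapply J3 z) (mapply (Y2_J3 cu) z) i3 i3 + (Czero))%C.
    + unfold D_J3, quad_form, nu2, mapply, Y2_J3, Hterm, Sym6, calt, J3, sum4; simpl; ring.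
    + rewrite ?HT; ring.
Qed.


Definition tri (T : I4 -> I4 -> I4 -> Cplx) (u v w : vec) :=
  sum4 (fun k => sum4 (fun l => sum4 (fun m => T k l m * u k * v l * w m))).
Definition vzero : vec := fun _ => Czero.

Lemma tri_diff T u v w :
  tri T (vadd u (vadd v w)) (vadd u (vadd v w)) (vadd u (vadd v w))
  - tri T (vadd u v) (vadd u v) (vadd u v) - tri T (vadd u w) (vadd u w) (vadd u w)
  - tri T (vadd v w) (vadd v w) (vadd v w) + tri T u u u + tri T v v v + tri T w w w
  - tri T vzero vzero vzero
  = tri T u v w + tri T u w v + tri T v u w + tri T v w u + tri T w u v + tri T w v u.
Proof. unfold tri, vadd, vzero, sum4. ring. Qed.

Lemma tri_basis T k l m : tri T (basis k) (basis l) (basis m) = T k l m.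
Proof. destruct k, l, m; unfold tri, basis, sum4; simpl; ring. Qed.

Lemma cub_extract (T : I4 -> I4 -> I4 -> Cplx) :
  (forall z, tri T z z z = Czero) -> forall k l m, Sym6 T k l m = Czero.
Proof.
  intros H k l m.
  pose proof (tri_diff T (basis k) (basis l) (basis m)) as E.
  rewrite !H in E. rewrite !tri_basis in E. unfold Sym6. rewrite <- E. ring.
Qed.

Lemma contr_cub (J : mat) (c : coef2) b z :
  sum4 (fun a => mapply J z a * quad_form c a b z) =
  tri (fun k l m => sum4 (fun a => J a k * c a b l m)) z z z.
Proof. unfold tri, mapply, quad_form, sum4. ring. Qed.

Local Close Scope C_scope.

Lemma Cnorm_ge0 x : 0 <= Cnorm x.
Proof. unfold Cnorm. apply sqrt_pos. Qed.

Lemma Cnorm_mul x y : Cnorm (Cmul x y) = Cnorm x * Cnorm y.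
Proof.
  destruct x as [a b], y as [c d]; unfold Cnorm, Cmul; simpl.
  rewrite <- sqrt_mult by nra. f_equal. ring.
Qed.

Lemma Cnorm_opp x : Cnorm (Copp x) = Cnorm x.
Proof. destruct x as [a b]; unfold Cnorm, Copp; simpl. f_equal. ring. Qed.

Lemma Cnorm_triangle x y : Cnorm (Cadd x y) <= Cnorm x + Cnorm y.
Proof.
  destruct x as [a b], y as [c d]; unfold Cnorm, Cadd; simpl.
  set (A := a*a+b*b). set (C := c*c+d*d).
  assert (HA : 0 <= A) by (unfold A; nra). assert (HC : 0 <= C) by (unfold C; nra).
  apply Rsqr_incr_0_var.
  - unfold Rsqr. rewrite sqrt_sqrt by (apply Rplus_le_le_0_compat; apply Rle_0_sqr).
    replace ((sqrt A + sqrt C) * (sqrt A + sqrt C)) with (sqrt A * sqrt A + sqrt C * sqrt C + 2 * (sqrt A * sqrt C)) by ring.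
    rewrite !sqrt_sqrt by auto. rewrite <- sqrt_mult by auto.
    assert (a*c+b*d <= sqrt (A*C)).
    { destruct (Rle_or_lt (a*c+b*d) 0) as [h|h].
      - pose proof (sqrt_pos (A*C)). lra.
      - apply Rsqr_incr_0_var; [| apply sqrt_pos]. unfold Rsqr. rewrite sqrt_sqrt by nra.
        unfold A, C. pose proof (Rle_0_sqr (a*d-b*c)). unfold Rsqr in *. nra. }
    unfold A, C in *. set (s := sqrt _) in *. nra.
  - pose proof (sqrt_pos A); pose proof (sqrt_pos C); lra.
Qed.

Lemma Cnorm_sub_triangle x y : Cnorm (Csub x y) <= Cnorm x + Cnorm y.
Proof. unfold Csub. rewrite <- (Cnorm_opp y). apply Cnorm_triangle. Qed.

Lemma Cnorm_zero_inv x : Cnorm x = 0 -> x = Czero.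
Proof.
  destruct x as [a b]; unfold Cnorm; simpl. intro H.
  apply sqrt_eq_0 in H; [| nra]. unfold Czero, RtoC. assert (a = 0) by nra. assert (b = 0) by nra.
  subst; reflexivity.
Qed.


Lemma Cnorm_RtoC_pos r : 0 <= r -> Cnorm (RtoC r) = r.
Proof. intro H. unfold Cnorm, RtoC; simpl. replace (r*r+0*0) with (r*r) by ring. apply sqrt_square; auto. Qed.

Lemma vadd_zero z i : vadd z (vscale Czero (basis i)) = z.
Proof.
  apply functional_extensionality. intro a. unfold vadd, vscale. apply Cplx_eq;
  unfold Cadd, Cmul, Czero, RtoC; simpl; ring.
Qed.

Lemma hp_unique f i z l1 l2 : has_partial f i z l1 -> has_partial f i z l2 -> l1 = l2.
Proof.
  intros H1 H2. destruct (Req_dec (Cnorm (Csub l1 l2)) 0) as [E|E].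
  { apply Cnorm_zero_inv in E. replace l1 with (Cadd (Csub l1 l2) l2) by ring. rewrite E. ring. }
  set (m := Cnorm (Csub l1 l2)) in *.
  assert (Hm : 0 < m) by (pose proof (Cnorm_ge0 (Csub l1 l2)); unfold m in *; lra).
  destruct (H1 (m/4) ltac:(lra)) as [d1 [Hd1 P1]].
  destruct (H2 (m/4) ltac:(lra)) as [d2 [Hd2 P2]].
  assert (Hdm : 0 < Rmin d1 d2) by (apply Rmin_glb_lt; lra).
  pose proof (Rmin_l d1 d2). pose proof (Rmin_r d1 d2).
  set (r := Rmin d1 d2 / 2).
  assert (Hr : 0 < r) by (unfold r; lra).
  assert (Hr1 : r < d1) by (unfold r; lra).
  assert (Hr2 : r < d2) by (unfold r; lra).
  set (h := RtoC r).
  assert (Hh : Cnorm h = r) by (apply Cnorm_RtoC_pos; lra).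
  specialize (P1 h ltac:(rewrite Hh; lra)). specialize (P2 h ltac:(rewrite Hh; lra)).
  set (w := vadd z (vscale h (basis i))) in *.
  assert (E2 : Cmul h (Csub l1 l2) = Csub (Csub (Csub (f w) (f z)) (Cmul h l2)) (Csub (Csub (f w) (f z)) (Cmul h l1))) by ring.
  pose proof (Cnorm_sub_triangle (Csub (Csub (f w) (f z)) (Cmul h l2)) (Csub (Csub (f w) (f z)) (Cmul h l1))) as T.
  rewrite <- E2, Cnorm_mul, Hh in T. fold m in T. nra.
Qed.

Lemma hp_local f g i z l r : 0 < r ->
  (forall h, Cnorm h < r -> f (vadd z (vscale h (basis i))) = g (vadd z (vscale h (basis i)))) ->
  has_partial g i z l -> has_partial f i z l.
Proof.
  intros Hr Hfg Hg e He. destruct (Hg e He) as [d [Hd P]].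
  pose proof (Rmin_l d r). pose proof (Rmin_r d r).
  exists (Rmin d r). split; [apply Rmin_glb_lt; lra|].
  intros h [Hh1 Hh2].
  assert (Hfz : f z = g z).
  { pose proof (Hfg Czero ltac:(unfold Czero; rewrite Cnorm_RtoC_pos; lra)) as E. rewrite !vadd_zero in E. exact E. }
  rewrite Hfz, Hfg by lra.
  apply P. split; lra.
Qed.

Lemma hp_sub f g i z l1 l2 : has_partial f i z l1 -> has_partial g i z l2 ->
  has_partial (fun w => Csub (f w) (g w)) i z (Csub l1 l2).
Proof.
  intros H1 H2 e He. destruct (H1 (e/2) ltac:(lra)) as [d1 [Hd1 P1]].
  destruct (H2 (e/2) ltac:(lra)) as [d2 [Hd2 P2]].
  pose proof (Rmin_l d1 d2). pose proof (Rmin_r d1 d2).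
  exists (Rmin d1 d2). split; [apply Rmin_glb_lt; lra|].
  intros h [Hh1 Hh2]. set (w := vadd z (vscale h (basis i))).
  specialize (P1 h ltac:(lra)). specialize (P2 h ltac:(lra)). fold w in P1, P2.
  replace (Csub (Csub (Csub (f w) (g w)) (Csub (f z) (g z))) (Cmul h (Csub l1 l2)))
    with (Csub (Csub (Csub (f w) (f z)) (Cmul h l1)) (Csub (Csub (g w) (g z)) (Cmul h l2))) by ring.
  pose proof (Cnorm_sub_triangle (Csub (Csub (f w) (f z)) (Cmul h l1)) (Csub (Csub (g w) (g z)) (Cmul h l2))). lra.
Qed.

Lemma hp_mul f g i z l1 l2 : has_partial f i z l1 -> has_partial g i z l2 ->
  has_partial (fun w => Cmul (f w) (g w)) i z (Cadd (Cmul l1 (g z)) (Cmul (f z) l2)).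
Proof.
  intros H1 H2 e He.
  set (a := Cnorm (f z)). set (b := Cnorm (g z)). set (p := Cnorm l1). set (q := Cnorm l2).
  assert (Ha : 0 <= a) by apply Cnorm_ge0. assert (Hb : 0 <= b) by apply Cnorm_ge0.
  assert (Hp : 0 <= p) by apply Cnorm_ge0. assert (Hq : 0 <= q) by apply Cnorm_ge0.
  set (e1 := e / (3 * (b + q + 1))).
  assert (He1 : 0 < e1) by (unfold e1; apply Rdiv_lt_0_compat; lra).
  set (e2 := Rmin 1 (e / (3 * (a + 1)))).
  assert (He2 : 0 < e2) by (unfold e2; apply Rmin_glb_lt; [lra| apply Rdiv_lt_0_compat; lra]).
  assert (He2a : e2 <= 1) by apply Rmin_l.
  assert (He2b : e2 <= e / (3 * (a + 1))) by apply Rmin_r.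
  set (d3 := e / (3 * (p + 1) * (q + 1))).
  assert (Hd3 : 0 < d3) by (unfold d3; apply Rdiv_lt_0_compat; nra).
  destruct (H1 e1 He1) as [d1 [Hd1 P1]].
  destruct (H2 e2 He2) as [d2 [Hd2 P2]].
  set (d := Rmin (Rmin d1 d2) (Rmin 1 d3)).
  assert (Hdd1 : d <= d1) by (unfold d; pose proof (Rmin_l (Rmin d1 d2) (Rmin 1 d3)); pose proof (Rmin_l d1 d2); lra).
  assert (Hdd2 : d <= d2) by (unfold d; pose proof (Rmin_l (Rmin d1 d2) (Rmin 1 d3)); pose proof (Rmin_r d1 d2); lra).
  assert (Hdd3 : d <= 1) by (unfold d; pose proof (Rmin_r (Rmin d1 d2) (Rmin 1 d3)); pose proof (Rmin_l 1 d3); lra).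
  assert (Hdd4 : d <= d3) by (unfold d; pose proof (Rmin_r (Rmin d1 d2) (Rmin 1 d3)); pose proof (Rmin_r 1 d3); lra).
  assert (Hd : 0 < d) by (unfold d; repeat apply Rmin_glb_lt; lra).
  exists d. split; auto.
  intros h [Hh1 Hh2]. set (w := vadd z (vscale h (basis i))).
  specialize (P1 h ltac:(lra)). specialize (P2 h ltac:(lra)). fold w in P1, P2.
  set (Rf := Csub (Csub (f w) (f z)) (Cmul h l1)) in *.
  set (Rg := Csub (Csub (g w) (g z)) (Cmul h l2)) in *.
  set (nh := Cnorm h) in *.
  assert (E : Csub (Csub (Cmul (f w) (g w)) (Cmul (f z) (g z))) (Cmul h (Cadd (Cmul l1 (g z)) (Cmul (f z) l2)))
     = Cadd (Cadd (Cmul Rf (g w)) (Cmul (f z) Rg)) (Cmul (Cmul h l1) (Cadd (Cmul h l2) Rg))).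
  { unfold Rf, Rg. ring. }
  rewrite E.
  assert (Gw : Cnorm (g w) <= b + q + 1).
  { replace (g w) with (Cadd (g z) (Cadd (Cmul h l2) Rg)) by (unfold Rg; ring).
    pose proof (Cnorm_triangle (g z) (Cadd (Cmul h l2) Rg)) as U1.
    pose proof (Cnorm_triangle (Cmul h l2) Rg) as U2. rewrite Cnorm_mul in U2. fold nh q b in U1, U2.
    assert (nh * q <= q) by nra. assert (e2 * nh <= 1) by nra. lra. }
  assert (G2 : Cnorm (Cadd (Cmul h l2) Rg) <= nh * (q + 1)).
  { pose proof (Cnorm_triangle (Cmul h l2) Rg) as U2. rewrite Cnorm_mul in U2. fold nh q in U2. nra. }
  pose proof (Cnorm_triangle (Cadd (Cmul Rf (g w)) (Cmul (f z) Rg)) (Cmul (Cmul h l1) (Cadd (Cmul h l2) Rg))) as U3.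
  pose proof (Cnorm_triangle (Cmul Rf (g w)) (Cmul (f z) Rg)) as U4.
  rewrite !Cnorm_mul in U3, U4. fold a p nh in U3, U4.
  assert (T1 : Cnorm Rf * Cnorm (g w) <= e1 * nh * (b + q + 1)).
  { apply Rmult_le_compat; auto using Cnorm_ge0. }
  assert (T1' : e1 * nh * (b + q + 1) = e / 3 * nh).
  { unfold e1. field. lra. }
  assert (T2 : a * Cnorm Rg <= a * (e2 * nh)) by (apply Rmult_le_compat_l; auto).
  assert (T2' : a * (e2 * nh) <= e / 3 * nh).
  { assert (a * e2 <= e / 3).
    { apply Rle_trans with (a * (e / (3 * (a + 1)))). apply Rmult_le_compat_l; auto.
      apply Rle_trans with ((a+1) * (e / (3 * (a + 1)))). nra.
      right. field. lra. }
    nra. }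
  assert (T3 : nh * p * Cnorm (Cadd (Cmul h l2) Rg) <= nh * p * (nh * (q + 1))).
  { apply Rmult_le_compat_l; auto. nra. }
  assert (T3' : nh * p * (nh * (q + 1)) <= e / 3 * nh).
  { assert (p * (q+1) * nh <= e / 3).
    { apply Rle_trans with (p * (q+1) * d3). apply Rmult_le_compat_l. nra. lra.
      apply Rle_trans with ((p+1) * (q+1) * d3). apply Rmult_le_compat_r; nra.
      unfold d3. right. field. nra. }
    nra. }
  lra.
Qed.

Lemma quad_expand c b d i z h :
  Csub (Csub (quad_form c b d (vadd z (vscale h (basis i)))) (quad_form c b d z)) (Cmul h (dquad c i b d z))
  = Cmul (Cmul h h) (c b d i i).
Proof. destruct i; unfold quad_form, dquad, vadd, vscale, basis, sum4; simpl; ring. Qed.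

Lemma hp_quad c b d i z : has_partial (quad_form c b d) i z (dquad c i b d z).
Proof.
  intros e He. set (m := Cnorm (c b d i i)).
  assert (Hm : 0 <= m) by apply Cnorm_ge0.
  exists (e / (m + 1)). split; [apply Rdiv_lt_0_compat; lra|].
  intros h [Hh1 Hh2]. rewrite quad_expand, !Cnorm_mul. fold m.
  assert (Cnorm h * m <= e).
  { apply Rle_trans with (e / (m+1) * m). apply Rmult_le_compat_r; lra.
    apply Rle_trans with (e / (m+1) * (m+1)). pose proof (Rdiv_lt_0_compat e (m+1) He ltac:(lra)). nra.
    right. field. lra. }
  pose proof (Cnorm_ge0 h). nra.
Qed.

Lemma Cnorm_basis h i j : Cnorm (Cmul h (basis i j)) <= Cnorm h.
Proof.
  rewrite Cnorm_mul. unfold basis. destruct (Nat.eqb (idx j) (idx i)).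
  - unfold Cone. rewrite Cnorm_RtoC_pos by lra. lra.
  - unfold Czero. rewrite Cnorm_RtoC_pos by lra. pose proof (Cnorm_ge0 h). lra.
Qed.

Lemma in_polydisc z r h i : Cnorm h < r -> polydisc z r (vadd z (vscale h (basis i))).
Proof.
  intros H j. unfold vadd, vscale.
  replace (Csub (Cadd (z j) (Cmul h (basis i j))) (z j)) with (Cmul h (basis i j)) by ring.
  pose proof (Cnorm_basis h i j). lra.
Qed.

Lemma choose_partial (V : vec -> Prop) (w : I4 -> vec -> Cplx) p :
  V p -> (forall a, holo_on V (w a)) -> exists A : I4 -> I4 -> Cplx, forall i a, has_partial (w a) i p (A i a).
Proof.
  intros Hp Hh.
  assert (forall ia : I4 * I4, exists l, has_partial (w (snd ia)) (fst ia) p l).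
  { intros [i a]. simpl. exact (Hh a p Hp i). }
  exists (fun i a => proj1_sig (constructive_indefinite_description _ (H (i, a)))).
  intros i a. exact (proj2_sig (constructive_indefinite_description _ (H (i, a)))).
Qed.


Lemma wedge_partial (w1 w2 : I4 -> vec -> Cplx) (A B : I4 -> I4 -> Cplx) p i b d :
  (forall i a, has_partial (w1 a) i p (A i a)) ->
  (forall i a, has_partial (w2 a) i p (B i a)) ->
  has_partial (fun z => wedge11 w1 w2 b d z) i p
    (Csub (Cadd (Cmul (A i b) (w2 d p)) (Cmul (w1 b p) (B i d)))
          (Cadd (Cmul (A i d) (w2 b p)) (Cmul (w1 d p) (B i b)))).
Proof.
  intros HA HB. unfold wedge11.
  apply (hp_sub (fun z => Cmul (w1 b z) (w2 d z)) (fun z => Cmul (w1 d z) (w2 b z)));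
  apply hp_mul; auto.
Qed.

Definition dwq (x y : vec) (A B : I4 -> I4 -> Cplx) (i b d : I4) : Cplx :=
  Csub (Cadd (Cmul (A i b) (y d)) (Cmul (x b) (B i d))) (Cadd (Cmul (A i d) (y b)) (Cmul (x d) (B i b))).
Definition dq3 x y A B a b d := Cadd (Csub (dwq x y A B a b d) (dwq x y A B b a d)) (dwq x y A B d a b).
Definition Edot x y A B (u : vec) :=
  Csub (Cadd (Csub (Cmul (u i0) (dq3 x y A B i1 i2 i3)) (Cmul (u i1) (dq3 x y A B i0 i2 i3)))
                (Cmul (u i2) (dq3 x y A B i0 i1 i3))) (Cmul (u i3) (dq3 x y A B i0 i1 i2)).

Lemma quarter : Cmul (RtoC (/4)) (Cn 4) = Cone.
Proof. apply Cplx_eq; unfold Cmul, RtoC, Cone, Cn, Cadd, Czero; simpl; field. Qed.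

Lemma Edot_x x y A B : Edot x y A B x =
  wedge22 (fun a b => Csub (A a b) (A b a)) (fun a b => Csub (Cmul (x a) (y b)) (Cmul (x b) (y a))).
Proof.
  transitivity (Cmul (Cmul (RtoC (/4)) (Cn 4)) (Edot x y A B x)).
  { rewrite quarter. ring. }
  unfold wedge22, Edot, dq3, dwq, sum4, Defs.eps4. simpl. ring.
Qed.
Lemma Edot_y x y A B : Edot x y A B y =
  wedge22 (fun a b => Csub (B a b) (B b a)) (fun a b => Csub (Cmul (x a) (y b)) (Cmul (x b) (y a))).
Proof.
  transitivity (Cmul (Cmul (RtoC (/4)) (Cn 4)) (Edot x y A B y)).
  { rewrite quarter. ring. }
  unfold wedge22, Edot, dq3, dwq, sum4, Defs.eps4. simpl. ring.
Qed.

Lemma dot_lemma (c : coef2) p (x : vec) (Hth : forall a b d, d_quad c a b d p = nu3 x a b d) : forall u : vec,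
     Csub (Cadd (Csub (Cmul (u i0) (d_quad c i1 i2 i3 p)) (Cmul (u i1) (d_quad c i0 i2 i3 p)))
                (Cmul (u i2) (d_quad c i0 i1 i3 p))) (Cmul (u i3) (d_quad c i0 i1 i2 p))
     = sum4 (fun a => Cmul (u a) (x a)).
Proof. intro u. rewrite !Hth. cbv beta iota delta [nu3 sum4]. ring. Qed.

Lemma ixeta (c : coef2) (X : mat)
  (Hint : integrable2 (quad_form c))
  (HX : forall a b d z, d_quad c a b d z = iX_nu X a b d z) :
  forall z d, sum4 (fun a => Cmul (mapply X z a) (quad_form c a d z)) = Czero.
Proof.
  intros p d.
  destruct (classic (exists a b, quad_form c a b p <> Czero)) as [Hne|Hz].
  2:{ assert (forall a b, quad_form c a b p = Czero).
      { intros a b. apply NNPP. intro. apply Hz. eauto. }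
      unfold sum4. rewrite !H. ring. }
  destruct (Hint p Hne) as [V [w1 [w2 [HV [Hp [H1 [H2 [Heq Hint22]]]]]]]].
  destruct (choose_partial V w1 p Hp H1) as [A HA].
  destruct (choose_partial V w2 p Hp H2) as [B HB].
  destruct (HV p Hp) as [r [Hr Hsub]].
  assert (Hd : forall i b d, dquad c i b d p =
     Csub (Cadd (Cmul (A i b) (w2 d p)) (Cmul (w1 b p) (B i d)))
          (Cadd (Cmul (A i d) (w2 b p)) (Cmul (w1 d p) (B i b)))).
  { intros i b d'. apply (hp_unique (quad_form c b d') i p).
    - apply hp_quad.
    - apply (hp_local _ (fun z => wedge11 w1 w2 b d' z) i p _ r Hr).
      + intros h Hh. apply Heq. apply Hsub. apply in_polydisc. exact Hh.
      + apply wedge_partial; auto. }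
  remember (mapply X p) as x eqn:Ex.
  assert (Hth : forall a b d, d_quad c a b d p = nu3 x a b d).
  { intros. rewrite HX. unfold iX_nu. rewrite nu3_ok. subst x. reflexivity. }
  assert (Dot := dot_lemma c p x Hth).
  assert (Hq : forall a b, quad_form c a b p = wedge11 w1 w2 a b p) by (intros; apply Heq; exact Hp).
  assert (Hdq : forall a b d', d_quad c a b d' p = dq3 (fun a => w1 a p) (fun a => w2 a p) A B a b d').
  { intros. unfold d_quad, dq3, dwq. rewrite !Hd. reflexivity. }
  assert (Hw : (fun a b => quad_form c a b p) = (fun a b => Csub (Cmul (w1 a p) (w2 b p)) (Cmul (w1 b p) (w2 a p)))).
  { apply functional_extensionality; intro a; apply functional_extensionality; intro b. apply Hq. }
  assert (D1 : sum4 (fun a => Cmul (w1 a p) (x a)) = Czero).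
  { rewrite <- (Dot (fun a => w1 a p)). rewrite !Hdq. fold (Edot (fun a => w1 a p) (fun a => w2 a p) A B (fun a => w1 a p)).
    rewrite Edot_x. rewrite <- Hw. apply (Hint22 p Hp w1 (or_introl eq_refl) A). intros a b. apply HA. }
  assert (D2 : sum4 (fun a => Cmul (w2 a p) (x a)) = Czero).
  { rewrite <- (Dot (fun a => w2 a p)). rewrite !Hdq. fold (Edot (fun a => w1 a p) (fun a => w2 a p) A B (fun a => w2 a p)).
    rewrite Edot_y. rewrite <- Hw. apply (Hint22 p Hp w2 (or_intror eq_refl) B). intros a b. apply HB. }
  transitivity (sum4 (fun a => Cmul (x a) (wedge11 w1 w2 a d p))).
  { unfold sum4. rewrite !Heq by exact Hp. reflexivity. }
  transitivity (Csub (Cmul (sum4 (fun a => Cmul (w1 a p) (x a))) (w2 d p))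
                     (Cmul (sum4 (fun a => Cmul (w2 a p) (x a))) (w1 d p))).
  { unfold sum4, wedge11. ring. }
  rewrite D1, D2. ring.
Qed.

Local Open Scope C_scope.

Lemma Cn_RtoC n : Cn n = RtoC (INR n).
Proof.
  induction n as [|n IH]; [reflexivity|]. simpl Cn. rewrite IH.
  rewrite S_INR. apply Cplx_eq; unfold Cadd, Cone, RtoC; simpl; ring.
Qed.
Lemma Cn_nz n : n <> O -> Cn n <> Czero.
Proof.
  intros H E. rewrite Cn_RtoC in E. injection E. intros. apply H. apply INR_eq. simpl. lra.
Qed.
Lemma Cmul_cancel_l a x y : a <> Czero -> Cmul a x = y -> x = Cmul (Cinv a) y.
Proof. intros Ha E. rewrite <- E. field. exact Ha. Qed.

Lemma nu2_scale u v s a b : nu2 u (fun i => Cmul s (v i)) a b = Cmul s (nu2 u v a b).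
Proof. destruct a, b; unfold nu2; ring. Qed.
Lemma mapply_scale (Y : mat) s z : mapply (fun i j => Cmul s (Y i j)) z = fun i => Cmul s (mapply Y z i).
Proof. apply functional_extensionality; intro i. unfold mapply, sum4. ring. Qed.

Lemma kos_J4 (cu : coef2)
  (H : forall z b, sum4 (fun a => Cmul (mapply mid z a) (quad_form (calt cu) a b z)) = Czero) :
  exists Y, forall a b z, quad_form (calt cu) a b z = nu2 (mapply mid z) (mapply Y z) a b.
Proof.
  assert (HT : forall b k l m, Hterm mid (calt cu) b k l m = Czero).
  { intros b. unfold Hterm. apply cub_extract. intro z. rewrite <- contr_cub. apply H. }
  exists (fun i j => Cmul (Cinv (Cn D_J4)) (Y2_J4 cu i j)).
  intros a b z. rewrite mapply_scale, nu2_scale. apply Cmul_cancel_l.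
  - apply Cn_nz. unfold D_J4. discriminate.
  - apply cert_J4. exact HT.
Qed.

Lemma kos_J3 (cu : coef2)
  (H : forall z b, sum4 (fun a => Cmul (mapply J3 z a) (quad_form (calt cu) a b z)) = Czero) :
  exists Y, forall a b z, quad_form (calt cu) a b z = nu2 (mapply J3 z) (mapply Y z) a b.
Proof.
  assert (HT : forall b k l m, Hterm J3 (calt cu) b k l m = Czero).
  { intros b. unfold Hterm. apply cub_extract. intro z. rewrite <- contr_cub. apply H. }
  exists (fun i j => Cmul (Cinv (Cn D_J3)) (Y2_J3 cu i j)).
  intros a b z. rewrite mapply_scale, nu2_scale. apply Cmul_cancel_l.
  - apply Cn_nz. unfold D_J3. discriminate.
  - apply cert_J3. exact HT.
Qed.


Lemma sum4_ext f g : (forall x, f x = g x) -> sum4 f = sum4 g.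
Proof. intros H. unfold sum4. rewrite !H. reflexivity. Qed.
Lemma sum4_swap (F : I4 -> I4 -> Cplx) : sum4 (fun k => sum4 (fun e => F k e)) = sum4 (fun e => sum4 (fun k => F k e)).
Proof. unfold sum4. ring. Qed.
Lemma sum4_mulr f x : sum4 f * x = sum4 (fun k => f k * x).
Proof. unfold sum4. ring. Qed.
Lemma sum4_mull f x : x * sum4 f = sum4 (fun k => x * f k).
Proof. unfold sum4. ring. Qed.
Lemma sum4_swap4 (T : I4 -> I4 -> I4 -> I4 -> Cplx) :
  sum4 (fun k => sum4 (fun l => sum4 (fun e => sum4 (fun f => T k l e f)))) =
  sum4 (fun e => sum4 (fun f => sum4 (fun k => sum4 (fun l => T k l e f)))).
Proof.
  transitivity (sum4 (fun k => sum4 (fun e => sum4 (fun l => sum4 (fun f => T k l e f))))).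
  { apply sum4_ext; intro k. exact (sum4_swap (fun l e => sum4 (fun f => T k l e f))). }
  transitivity (sum4 (fun e => sum4 (fun k => sum4 (fun l => sum4 (fun f => T k l e f))))).
  { exact (sum4_swap (fun k e => sum4 (fun l => sum4 (fun f => T k l e f)))). }
  apply sum4_ext; intro e.
  transitivity (sum4 (fun k => sum4 (fun f => sum4 (fun l => T k l e f)))).
  { apply sum4_ext; intro k. exact (sum4_swap (fun l f => T k l e f)). }
  exact (sum4_swap (fun k f => sum4 (fun l => T k l e f))).
Qed.

Lemma mapply_mmul A B z : mapply (mmul A B) z = mapply A (mapply B z).
Proof. apply functional_extensionality; intro i. unfold mapply, mmul, sum4. ring. Qed.
Lemma mapply_mid z : mapply mid z = z.
Proof. apply functional_extensionality; intro i. destruct i; unfold mapply, mid, sum4; simpl; ring. Qed.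

Definition csrc (c : coef2) (P : mat) : coef2 := fun a b k l =>
  sum4 (fun m => sum4 (fun n => c a b m n * P m k * P n l)).
Definition ctgt (c : coef2) (Q' : mat) : coef2 := fun a b k l =>
  sum4 (fun e => sum4 (fun f => Q' e a * Q' f b * c e f k l)).

Lemma quad_csrc c P a b w : quad_form (csrc c P) a b w = quad_form c a b (mapply P w).
Proof. unfold quad_form, csrc, mapply, sum4. ring. Qed.
Lemma quad_ctgt c Q' a b w :
  quad_form (ctgt c Q') a b w = sum4 (fun e => sum4 (fun f => Q' e a * Q' f b * quad_form c e f w)).
Proof. unfold quad_form, ctgt.
  transitivity (sum4 (fun k => sum4 (fun l => sum4 (fun e => sum4 (fun f => Q' e a * Q' f b * (c e f k l * w k * w l)))))).
  { apply sum4_ext; intro k; apply sum4_ext; intro l. unfold sum4. ring. }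
  rewrite sum4_swap4. apply sum4_ext; intro e; apply sum4_ext; intro f.
  unfold sum4. ring. Qed.

Lemma alt_zero c : alternating_coef c -> forall a k l, c a a k l = Czero.
Proof.
  intros H a k l. pose proof (H a a k l) as E.
  assert (E2 : Cmul (Cn 2) (c a a k l) = Czero).
  { transitivity (Cadd (c a a k l) (Copp (c a a k l))); [|ring].
    rewrite <- E. simpl Cn. ring. }
  rewrite (Cmul_cancel_l _ _ _ (Cn_nz 2 ltac:(discriminate)) E2). ring.
Qed.

Lemma alt_calt c : alternating_coef c -> calt c = c.
Proof.
  intro H. apply functional_extensionality; intro a; apply functional_extensionality; intro b;
  apply functional_extensionality; intro k; apply functional_extensionality; intro l.
  unfold calt. destruct a, b; simpl; try reflexivity; try (rewrite alt_zero by exact H; reflexivity);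
  rewrite (H _ _ k l); ring.
Qed.

Lemma csrc_alt c P : alternating_coef c -> alternating_coef (csrc c P).
Proof.
  intros H a b k l. unfold csrc, sum4. rewrite !(H a b). ring.
Qed.
Lemma ctgt_alt c Q' : alternating_coef c -> alternating_coef (ctgt c Q').
Proof.
  intros H a b k l. rewrite <- (alt_calt c H). unfold ctgt, calt, sum4. simpl. ring.
Qed.

Lemma contr_ctgt (c : coef2) (Q Q' : mat) (x : vec) (z : vec) b :
  sum4 (fun a => Cmul (mapply Q x a) (sum4 (fun e => sum4 (fun f => Q' e a * Q' f b * quad_form c e f z)))) =
  sum4 (fun f => Cmul (Q' f b) (sum4 (fun e => Cmul (mapply (mmul Q' Q) x e) (quad_form c e f z)))).
Proof. unfold mapply, mmul, sum4. ring. Qed.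

Lemma back_ctgt (Q Q' : mat) (E : I4 -> I4 -> Cplx) c d :
  sum4 (fun a => sum4 (fun b => Q a c * Q b d * sum4 (fun e => sum4 (fun f => Q' e a * Q' f b * E e f)))) =
  sum4 (fun e => sum4 (fun f => mmul Q' Q e c * mmul Q' Q f d * E e f)).
Proof. unfold mmul, sum4. ring. Qed.

Lemma sum_mid (E : I4 -> I4 -> Cplx) c d :
  sum4 (fun e => sum4 (fun f => mid e c * mid f d * E e f)) = E c d.
Proof. destruct c, d; unfold mid, sum4; simpl; ring. Qed.

Definition detm (Q : mat) : Cplx := detv (fun i => Q i i0) (fun i => Q i i1) (fun i => Q i i2) (fun i => Q i i3).

Lemma nu2_trans (Q : mat) (u v : vec) c d :
  sum4 (fun a => sum4 (fun b => Q a c * Q b d * nu2 (mapply Q u) (mapply Q v) a b)) =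
  detm Q * nu2 u v c d.
Proof. destruct c, d; unfold detm, detv, nu2, mapply, sum4; simpl; ring. Qed.

Theorem partB (c : coef2) (X : mat) (Halt : alternating_coef c)
  (Hix : forall z d, sum4 (fun a => Cmul (mapply X z a) (quad_form c a d z)) = Czero)
  (NF : exists P P' Q Q' : mat,
    mmul P P' = mid /\ mmul P' P = mid /\ mmul Q Q' = mid /\ mmul Q' Q = mid /\
    (mmul Q (mmul X P) = mid \/ mmul Q (mmul X P) = J3)) :
  exists Y, forall a b z, quad_form c a b z = iY_iX_nu Y X a b z.
Proof.
  destruct NF as [P [P' [Q [Q' [HPP' [HP'P [HQQ' [HQ'Q HJ]]]]]]]].
  set (c' := ctgt (csrc c P) Q').
  assert (Halt' : alternating_coef c') by (apply ctgt_alt; apply csrc_alt; exact Halt).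
  assert (Hq' : forall a b w, quad_form c' a b w =
     sum4 (fun e => sum4 (fun f => Q' e a * Q' f b * quad_form c e f (mapply P w)))).
  { intros a b w. unfold c'. rewrite quad_ctgt. apply sum4_ext; intro e; apply sum4_ext; intro f.
    rewrite quad_csrc. reflexivity. }
  set (J := mmul Q (mmul X P)).
  assert (Hhyp : forall w b, sum4 (fun a => Cmul (mapply J w a) (quad_form c' a b w)) = Czero).
  { intros w b.
    transitivity (sum4 (fun a => Cmul (mapply Q (mapply X (mapply P w)) a)
        (sum4 (fun e => sum4 (fun f => Q' e a * Q' f b * quad_form c e f (mapply P w)))))).
    { apply sum4_ext; intro a. rewrite Hq'. unfold J. rewrite !mapply_mmul. reflexivity. }
    rewrite contr_ctgt. rewrite HQ'Q, mapply_mid.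
    transitivity (sum4 (fun f => Cmul (Q' f b) Czero)).
    { apply sum4_ext; intro f. rewrite Hix. reflexivity. }
    unfold sum4. ring. }
  assert (HY' : exists Y', forall a b w, quad_form c' a b w = nu2 (mapply J w) (mapply Y' w) a b).
  { rewrite <- (alt_calt c' Halt') in Hhyp |- *.
    destruct HJ as [HJ|HJ]; fold J in HJ; rewrite HJ in Hhyp |- *.
    - apply kos_J4. exact Hhyp.
    - apply kos_J3. exact Hhyp. }
  destruct HY' as [Y' HY'].
  exists (fun i j => Cmul (detm Q) (mmul Q' (mmul Y' P') i j)).
  intros c0 d z.
  unfold iY_iX_nu. rewrite nu2_ok.
  rewrite mapply_scale, nu2_scale, !mapply_mmul.
  transitivity (sum4 (fun a => sum4 (fun b => Q a c0 * Q b d *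
      sum4 (fun e => sum4 (fun f => Q' e a * Q' f b * quad_form c e f z))))).
  { rewrite back_ctgt, HQ'Q, sum_mid. reflexivity. }
  transitivity (sum4 (fun a => sum4 (fun b => Q a c0 * Q b d * quad_form c' a b (mapply P' z)))).
  { apply sum4_ext; intro a; apply sum4_ext; intro b. rewrite Hq'.
    rewrite <- mapply_mmul, HPP', mapply_mid. reflexivity. }
  transitivity (sum4 (fun a => sum4 (fun b => Q a c0 * Q b d *
      nu2 (mapply Q (mapply X z)) (mapply Q (mapply Q' (mapply Y' (mapply P' z)))) a b))).
  { apply sum4_ext; intro a; apply sum4_ext; intro b. rewrite HY'. unfold J.
    rewrite <- (mapply_mmul Q Q'), HQQ', mapply_mid, !mapply_mmul, <- (mapply_mmul P P'), HPP', mapply_mid.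
    reflexivity. }
  apply nu2_trans.
Qed.


Lemma symcoef c b d k l :
  c b d k l + c b d l k =
  quad_form c b d (vadd (basis k) (basis l)) - quad_form c b d (basis k) - quad_form c b d (basis l).
Proof. destruct k, l; unfold quad_form, vadd, basis, sum4; simpl; ring. Qed.

Lemma mapply_basis (M : mat) a : mapply M (basis a) = fun i => M i a.
Proof. apply functional_extensionality; intro i. destruct a; unfold mapply, basis, sum4; simpl; ring. Qed.

Lemma mapply_vadd (M : mat) u v : mapply M (vadd u v) = vadd (mapply M u) (mapply M v).
Proof. apply functional_extensionality; intro i. unfold mapply, vadd, sum4; ring. Qed.

Lemma nu2_polar (p q r s : vec) b d :
  nu2 (vadd p q) (vadd r s) b d - nu2 p r b d - nu2 q s b d = nu2 p s b d + nu2 q r b d.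
Proof. destruct b, d; unfold nu2, vadd; ring. Qed.

Definition dG (X Y : mat) (u : vec) b d (z : vec) :=
  nu2 (mapply X u) (mapply Y z) b d + nu2 (mapply X z) (mapply Y u) b d.

Lemma dG_sum X Y a b d z :
  sum4 (fun l => Cmul (dG X Y (basis a) b d (basis l)) (z l)) = dG X Y (basis a) b d z.
Proof. unfold dG, sum4. rewrite !mapply_basis. destruct b, d; unfold nu2, mapply, sum4; ring. Qed.

Lemma dquad_nu c X Y (H : forall a b z, quad_form c a b z = iY_iX_nu Y X a b z) a b d z :
  dquad c a b d z = dG X Y (basis a) b d z.
Proof.
  rewrite <- dG_sum. unfold dquad. apply sum4_ext; intro l. rewrite symcoef, !H.
  unfold iY_iX_nu. rewrite !nu2_ok, !mapply_vadd. rewrite nu2_polar. reflexivity.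
Qed.

Definition Wm (Y X : mat) : mat := fun i j =>
  trace Y * X i j - trace X * Y i j + (mmul X Y i j - mmul Y X i j).

Lemma dG_W X Y a b d z :
  dG X Y (basis a) b d z - dG X Y (basis b) a d z + dG X Y (basis d) a b z = nu3 (mapply (Wm Y X) z) a b d.
Proof.
  unfold dG. rewrite !mapply_basis.
  destruct a, b, d; unfold nu2, nu3, mapply, Wm, trace, mmul, sum4; ring.
Qed.


Lemma nu3_comp (u : vec) i :
  u i = match i with
        | i0 => nu3 u i1 i2 i3 | i1 => Copp (nu3 u i0 i2 i3)
        | i2 => nu3 u i0 i1 i3 | i3 => Copp (nu3 u i0 i1 i2) end.
Proof. destruct i; unfold nu3; ring. Qed.

Lemma partC (c : coef2) (X Y : mat)
  (H : forall a b z, quad_form c a b z = iY_iX_nu Y X a b z)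
  (HX : forall a b d z, d_quad c a b d z = iX_nu X a b d z) :
  Wm Y X = X.
Proof.
  assert (E : forall a b d z, nu3 (mapply (Wm Y X) z) a b d = nu3 (mapply X z) a b d).
  { intros a b d z. rewrite <- dG_W. rewrite <- !(dquad_nu c X Y H).
    fold (d_quad c a b d z). rewrite HX. unfold iX_nu. apply nu3_ok. }
  apply functional_extensionality; intro i; apply functional_extensionality; intro j.
  pose proof (mapply_basis (Wm Y X) j) as E1. pose proof (mapply_basis X j) as E2.
  change (Wm Y X i j) with ((fun i => Wm Y X i j) i). rewrite <- E1.
  change (X i j) with ((fun i => X i j) i). rewrite <- E2.
  rewrite (nu3_comp (mapply (Wm Y X) (basis j))), (nu3_comp (mapply X (basis j))).
  destruct i; rewrite !E; reflexivity.
Qed.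

Lemma trace_X0 X Y : Wm Y X = X -> trace X = Czero.
Proof.
  intro H. assert (E : trace (Wm Y X) = Czero) by (unfold Wm; unfold trace, mmul, sum4; ring).
  rewrite H in E. exact E.
Qed.

Lemma lie_of_W X Y : Wm Y X = X -> lie_lin Y X = (fun i j => Cmul (Csub Cone (trace Y)) (X i j)).
Proof.
  intro H. pose proof (trace_X0 X Y H) as T.
  apply functional_extensionality; intro i; apply functional_extensionality; intro j.
  assert (E : Wm Y X i j = X i j) by (rewrite H; reflexivity).
  unfold Wm in E. rewrite T in E. unfold lie_lin.
  transitivity (Csub (Cadd (Csub (Cmul (trace Y) (X i j)) (Cmul Czero (Y i j))) (Csub (mmul X Y i j) (mmul Y X i j))) (Cmul (trace Y) (X i j))).
  { ring. }
  rewrite E. ring.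
Qed.

Lemma mmul_assoc A B C : mmul A (mmul B C) = mmul (mmul A B) C.
Proof.
  apply functional_extensionality; intro i; apply functional_extensionality; intro j.
  unfold mmul, sum4. ring.
Qed.
Lemma mmul_mid_l A : mmul mid A = A.
Proof.
  apply functional_extensionality; intro i; apply functional_extensionality; intro j.
  destruct i; unfold mmul, mid, sum4; simpl; ring.
Qed.
Lemma mmul_mid_r A : mmul A mid = A.
Proof.
  apply functional_extensionality; intro i; apply functional_extensionality; intro j.
  destruct j; unfold mmul, mid, sum4; simpl; ring.
Qed.
Lemma trace_comm A B : trace (mmul A B) = trace (mmul B A).
Proof. unfold trace, mmul, sum4. ring. Qed.
Lemma mpow_comm X k : mmul (mpow X k) X = mmul X (mpow X k).
Proof.
  induction k as [|k IH]; simpl.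
  - rewrite mmul_mid_l, mmul_mid_r. reflexivity.
  - rewrite <- mmul_assoc, IH. reflexivity.
Qed.

Lemma trace_lie M X Y lam : lie_lin Y X = (fun i j => Cmul lam (X i j)) ->
  Cmul lam (trace (mmul M X)) = Csub (trace (mmul M (mmul X Y))) (trace (mmul M (mmul Y X))).
Proof.
  intro H.
  transitivity (trace (mmul M (lie_lin Y X))).
  { rewrite H. unfold trace, mmul, sum4. ring. }
  unfold lie_lin, trace, mmul, sum4. ring.
Qed.

Lemma pow_trace_zero X Y lam : lie_lin Y X = (fun i j => Cmul lam (X i j)) -> lam <> Czero ->
  forall k, trace (mpow X (S k)) = Czero.
Proof.
  intros H Hl k.
  assert (E : Cmul lam (trace (mpow X (S k))) = Czero).
  { simpl mpow. rewrite <- mpow_comm. rewrite (trace_lie (mpow X k) X Y lam H).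
    rewrite !mmul_assoc. rewrite mpow_comm.
    rewrite (trace_comm (mmul (mpow X k) Y) X). rewrite mmul_assoc. ring. }
  rewrite (Cmul_cancel_l _ _ _ Hl E). ring.
Qed.

Definition Xp2 X := mmul X X.
Definition Xp3 X := mmul X (mmul X X).
Definition Xp4 X := mmul X (mmul X (mmul X X)).
Lemma CH_id X i j :
  let p1 := trace X in let p2 := trace (Xp2 X) in
  let p3 := trace (Xp3 X) in let p4 := trace (Xp4 X) in
  Cn 24 * Xp4 X i j - Cn 24 * p1 * Xp3 X i j + Cn 12 * (p1*p1 - p2) * Xp2 X i j
  - Cn 4 * (p1*p1*p1 - Cn 3*p1*p2 + Cn 2*p3) * X i j
  + (p1*p1*p1*p1 - Cn 6*p1*p1*p2 + Cn 3*p2*p2 + Cn 8*p1*p3 - Cn 6*p4) * mid i j = Czero.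
Proof.
  intros. unfold p1, p2, p3, p4. destruct i, j; unfold Xp2, Xp3, Xp4, trace, mmul, mid, sum4; simpl; ring.
Qed.

Lemma mpow_Xp X : mpow X 1 = X /\ mpow X 2 = Xp2 X /\ mpow X 3 = Xp3 X /\ mpow X 4 = Xp4 X.
Proof. unfold Xp2, Xp3, Xp4. simpl. rewrite !mmul_mid_r. tauto. Qed.

Lemma CH4 X : (forall k, trace (mpow X (S k)) = Czero) -> mpow X 4 = mzero.
Proof.
  intros H. destruct (mpow_Xp X) as [E1 [E2 [E3 E4]]].
  pose proof (H 0%nat) as H1. pose proof (H 1%nat) as H2. pose proof (H 2%nat) as H3. pose proof (H 3%nat) as H4.
  rewrite E1 in H1. rewrite E2 in H2. rewrite E3 in H3. rewrite E4 in H4 |- *.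
  apply functional_extensionality; intro i; apply functional_extensionality; intro j.
  pose proof (CH_id X i j) as E. cbv zeta in E.
  rewrite H1, H2, H3, H4 in E.
  assert (E5 : Cmul (Cn 24) (Xp4 X i j) = Czero).
  { rewrite <- E. ring. }
  rewrite (Cmul_cancel_l _ _ _ (Cn_nz 24 ltac:(discriminate)) E5). unfold mzero. ring.
Qed.


Definition lin4 (a b c d : Cplx) (p q r s : vec) : vec :=
  fun i => a * p i + b * q i + c * r i + d * s i.

Lemma mapply_lin4 M a b c d p q r s :
  mapply M (lin4 a b c d p q r s) = lin4 a b c d (mapply M p) (mapply M q) (mapply M r) (mapply M s).
Proof. apply functional_extensionality; intro i. unfold lin4, mapply, sum4. ring. Qed.

Lemma mapply_vzero M : mapply M vzero = vzero.
Proof. apply functional_extensionality; intro i. unfold mapply, vzero, sum4. ring. Qed.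

Definition colmat (w1 w2 w3 w4 : vec) : mat := fun i k =>
  match k with i0 => w1 i | i1 => w2 i | i2 => w3 i | i3 => w4 i end.

Lemma mapply_colmat w1 w2 w3 w4 al :
  mapply (colmat w1 w2 w3 w4) al = lin4 (al i0) (al i1) (al i2) (al i3) w1 w2 w3 w4.
Proof. apply functional_extensionality; intro i. unfold mapply, colmat, lin4, sum4. ring. Qed.

Lemma Cmul_integral_l a b : Cmul a b = Czero -> b <> Czero -> a = Czero.
Proof. intros H Hb. rewrite (Cmul_cancel_l b a Czero Hb) by (rewrite <- H; ring). ring. Qed.

Lemma chain_inj (X : mat) (w1 w2 w3 w4 : vec) a0
  (E2 : mapply X w1 = w2) (E3 : mapply X w2 = w3) (E4 : mapply X w3 = w4)
  (E5 : mapply X w4 = vzero) (Hnz : w4 a0 <> Czero) :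
  forall al, mapply (colmat w1 w2 w3 w4) al = vzero -> al = vzero.
Proof.
  intros al H. rewrite mapply_colmat in H.
  set (x0 := al i0) in *. set (x1 := al i1) in *. set (x2 := al i2) in *. set (x3 := al i3) in *.
  assert (S1 : mapply X (lin4 x0 x1 x2 x3 w1 w2 w3 w4) = lin4 x0 x1 x2 x3 w2 w3 w4 vzero).
  { rewrite mapply_lin4, E2, E3, E4, E5. reflexivity. }
  assert (S2 : mapply X (lin4 x0 x1 x2 x3 w2 w3 w4 vzero) = lin4 x0 x1 x2 x3 w3 w4 vzero vzero).
  { rewrite mapply_lin4, E3, E4, E5, mapply_vzero. reflexivity. }
  assert (S3 : mapply X (lin4 x0 x1 x2 x3 w3 w4 vzero vzero) = lin4 x0 x1 x2 x3 w4 vzero vzero vzero).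
  { rewrite mapply_lin4, E4, E5, mapply_vzero. reflexivity. }
  assert (Z1 : lin4 x0 x1 x2 x3 w2 w3 w4 vzero = vzero) by (rewrite <- S1, H; apply mapply_vzero).
  assert (Z2 : lin4 x0 x1 x2 x3 w3 w4 vzero vzero = vzero) by (rewrite <- S2, Z1; apply mapply_vzero).
  assert (Z3 : lin4 x0 x1 x2 x3 w4 vzero vzero vzero = vzero) by (rewrite <- S3, Z2; apply mapply_vzero).
  assert (A0 : x0 = Czero).
  { apply (Cmul_integral_l _ (w4 a0)); auto.
    assert (lin4 x0 x1 x2 x3 w4 vzero vzero vzero a0 = vzero a0) by (rewrite Z3; reflexivity).
    unfold lin4, vzero in H0. rewrite <- H0. ring. }
  assert (A1 : x1 = Czero).
  { apply (Cmul_integral_l _ (w4 a0)); auto.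
    assert (lin4 x0 x1 x2 x3 w3 w4 vzero vzero a0 = vzero a0) by (rewrite Z2; reflexivity).
    unfold lin4, vzero in H0. rewrite A0 in H0. rewrite <- H0. ring. }
  assert (A2 : x2 = Czero).
  { apply (Cmul_integral_l _ (w4 a0)); auto.
    assert (lin4 x0 x1 x2 x3 w2 w3 w4 vzero a0 = vzero a0) by (rewrite Z1; reflexivity).
    unfold lin4, vzero in H0. rewrite A0, A1 in H0. rewrite <- H0. ring. }
  assert (A3 : x3 = Czero).
  { apply (Cmul_integral_l _ (w4 a0)); auto.
    assert (lin4 x0 x1 x2 x3 w1 w2 w3 w4 a0 = vzero a0) by (rewrite H; reflexivity).
    unfold lin4, vzero in H0. rewrite A0, A1, A2 in H0. rewrite <- H0. ring. }
  apply functional_extensionality; intro i. destruct i; unfold vzero; assumption.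
Qed.

Lemma colmat_X (X : mat) w1 w2 w3 w4
  (E2 : mapply X w1 = w2) (E3 : mapply X w2 = w3) (E4 : mapply X w3 = w4) (E5 : mapply X w4 = vzero) :
  mmul X (colmat w1 w2 w3 w4) = mmul (colmat w1 w2 w3 w4) Nshift.
Proof.
  apply functional_extensionality; intro i; apply functional_extensionality; intro k.
  transitivity (mapply X (match k with i0 => w1 | i1 => w2 | i2 => w3 | i3 => w4 end) i).
  { destruct k; reflexivity. }
  destruct k; [rewrite E2|rewrite E3|rewrite E4|rewrite E5]; unfold mmul, colmat, Nshift, vzero, sum4; ring.
Qed.

Lemma RtoC_INR n : RtoC (INR n) = Cn n.
Proof. symmetry. apply Cn_RtoC. Qed.

Lemma colmat_Y (Y : mat) rho lam w1 w2 w3 w4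
  (E1 : mapply Y w1 = fun i => rho * w1 i)
  (E2 : mapply Y w2 = fun i => (rho - lam) * w2 i)
  (E3 : mapply Y w3 = fun i => (rho - Cn 2 * lam) * w3 i)
  (E4 : mapply Y w4 = fun i => (rho - Cn 3 * lam) * w4 i) :
  mmul Y (colmat w1 w2 w3 w4) = mmul (colmat w1 w2 w3 w4) (Ydiag rho lam).
Proof.
  apply functional_extensionality; intro i; apply functional_extensionality; intro k.
  transitivity (mapply Y (match k with i0 => w1 | i1 => w2 | i2 => w3 | i3 => w4 end) i).
  { destruct k; reflexivity. }
  destruct k; [rewrite E1|rewrite E2|rewrite E3|rewrite E4]; unfold mmul, colmat, Ydiag, sum4;
  rewrite !RtoC_INR; simpl; ring.
Qed.

Lemma trace_Ydiag rho lam : trace (Ydiag rho lam) = Cn 4 * rho - Cn 6 * lam.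
Proof. unfold trace, Ydiag, sum4. rewrite !RtoC_INR. simpl. ring. Qed.

Lemma conj_nf (X Y P Q D N : mat) (HPQ : mmul P Q = mid) (HQP : mmul Q P = mid)
  (HX : mmul X P = mmul P N) (HY : mmul Y P = mmul P D) :
  mmul Q (mmul X P) = N /\ mmul Q (mmul Y P) = D /\ trace Y = trace D.
Proof.
  split; [|split].
  - rewrite HX, mmul_assoc, HQP, mmul_mid_l. reflexivity.
  - rewrite HY, mmul_assoc, HQP, mmul_mid_l. reflexivity.
  - transitivity (trace (mmul Q (mmul Y P))).
    + rewrite trace_comm, <- mmul_assoc, HPQ, mmul_mid_r. reflexivity.
    + rewrite HY, mmul_assoc, HQP, mmul_mid_l. reflexivity.
Qed.

Lemma YX_vec (X Y : mat) lam (Hlie : lie_lin Y X = (fun i j => Cmul lam (X i j))) u :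
  mapply Y (mapply X u) = fun i => mapply X (mapply Y u) i - lam * mapply X u i.
Proof.
  apply functional_extensionality; intro i.
  rewrite <- !mapply_mmul.
  assert (E : forall j, mmul Y X i j = mmul X Y i j - lam * X i j).
  { intro j. assert (lie_lin Y X i j = Cmul lam (X i j)) by (rewrite Hlie; reflexivity).
    unfold lie_lin in H. rewrite <- H. ring. }
  unfold mapply at 1. unfold sum4. rewrite !E. unfold mapply, sum4. ring.
Qed.

Lemma mapply_mpow X n v : mapply (mpow X (S n)) v = mapply X (mapply (mpow X n) v).
Proof. simpl. apply mapply_mmul. Qed.

Lemma partE (X Y : mat) (lam : Cplx)
  (Hlie : lie_lin Y X = (fun i j => Cmul lam (X i j)))
  (Hl : lam <> Czero)
  (H4 : mpow X 4 = mzero)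
  (Hcube : exists a b, mpow X 3 a b <> Czero)
  (Inv : forall P, (forall u, mapply P u = vzero -> u = vzero) -> exists Q, mmul P Q = mid /\ mmul Q P = mid) :
  exists P Q rho, mmul P Q = mid /\ mmul Q P = mid /\ mmul Q (mmul X P) = Nshift /\
     mmul Q (mmul Y P) = Ydiag rho lam /\ trace Y = Cn 4 * rho - Cn 6 * lam.
Proof.
  destruct Hcube as [a0 [b0 Hab]].
  set (u1 := basis b0).
  set (u2 := mapply X u1). set (u3 := mapply X u2). set (u4 := mapply X u3).
  assert (Hu4 : u4 = mapply (mpow X 3) u1).
  { unfold u4, u3, u2. rewrite !mapply_mpow. simpl. rewrite mapply_mid. reflexivity. }
  assert (Hu5 : mapply X u4 = vzero).
  { rewrite Hu4, <- mapply_mpow, H4. apply functional_extensionality; intro i.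
    unfold mapply, mzero, vzero, sum4. ring. }
  assert (Hnz : u4 a0 <> Czero).
  { rewrite Hu4. unfold u1. rewrite mapply_basis. exact Hab. }
  destruct (Inv (colmat u1 u2 u3 u4) (chain_inj X u1 u2 u3 u4 a0 eq_refl eq_refl eq_refl Hu5 Hnz))
    as [Q0 [HPQ0 HQP0]].
  set (al := mapply Q0 (mapply Y u1)).
  assert (HYu1 : mapply Y u1 = lin4 (al i0) (al i1) (al i2) (al i3) u1 u2 u3 u4).
  { rewrite <- mapply_colmat. unfold al. rewrite <- mapply_mmul, HPQ0, mapply_mid. reflexivity. }
  set (a1 := al i0) in *. set (a2 := al i1) in *. set (a3 := al i2) in *. set (a4 := al i3) in *.
  assert (HYX := YX_vec X Y lam Hlie).
  assert (HYu2 : mapply Y u2 = lin4 (a1 - lam) a2 a3 Czero u2 u3 u4 u4).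
  { unfold u2 at 1. rewrite HYX, HYu1, mapply_lin4. fold u2 u3 u4. rewrite Hu5.
    apply functional_extensionality; intro i. unfold lin4, vzero. ring. }
  assert (HYu3 : mapply Y u3 = lin4 (a1 - Cn 2 * lam) a2 Czero Czero u3 u4 u4 u4).
  { unfold u3 at 1. rewrite HYX, HYu2, mapply_lin4. fold u3 u4. rewrite Hu5.
    apply functional_extensionality; intro i. unfold lin4, vzero. simpl Cn. ring. }
  assert (HYu4 : mapply Y u4 = lin4 (a1 - Cn 3 * lam) Czero Czero Czero u4 u4 u4 u4).
  { unfold u4 at 1. rewrite HYX, HYu3, mapply_lin4. fold u4. rewrite Hu5.
    apply functional_extensionality; intro i. unfold lin4, vzero. simpl Cn. ring. }
  set (b2 := Cdiv a2 lam).
  set (b3 := Cdiv (a3 + b2 * a2) (Cn 2 * lam)).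
  set (b4 := Cdiv (a4 + b2 * a3 + b3 * a2) (Cn 3 * lam)).
  set (v1 := lin4 Cone b2 b3 b4 u1 u2 u3 u4).
  set (v2 := lin4 Cone b2 b3 Czero u2 u3 u4 u4).
  set (v3 := lin4 Cone b2 Czero Czero u3 u4 u4 u4).
  assert (Ev2 : mapply X v1 = v2).
  { unfold v1. rewrite mapply_lin4. fold u2 u3 u4. rewrite Hu5.
    apply functional_extensionality; intro i. unfold v2, lin4, vzero. ring. }
  assert (Ev3 : mapply X v2 = v3).
  { unfold v2. rewrite mapply_lin4. fold u3 u4. rewrite Hu5.
    apply functional_extensionality; intro i. unfold v3, lin4, vzero. ring. }
  assert (Ev4 : mapply X v3 = u4).
  { unfold v3. rewrite mapply_lin4. fold u4. rewrite Hu5.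
    apply functional_extensionality; intro i. unfold lin4, vzero. ring. }
  assert (H2 : Cn 2 <> Czero) by (apply Cn_nz; discriminate).
  assert (H3 : Cn 3 <> Czero) by (apply Cn_nz; discriminate).
  assert (HYv1 : mapply Y v1 = fun i => a1 * v1 i).
  { unfold v1. rewrite mapply_lin4, HYu1, HYu2, HYu3, HYu4.
    apply functional_extensionality; intro i. unfold lin4, b4, b3, b2, Cdiv.
    field. auto. }
  assert (HYv2 : mapply Y v2 = fun i => (a1 - lam) * v2 i).
  { rewrite <- Ev2, HYX, HYv1. apply functional_extensionality; intro i.
    unfold mapply, sum4. ring. }
  assert (HYv3 : mapply Y v3 = fun i => (a1 - Cn 2 * lam) * v3 i).
  { rewrite <- Ev3, HYX, HYv2. apply functional_extensionality; intro i.
    unfold mapply, sum4. simpl Cn. ring. }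
  assert (HYv4 : mapply Y u4 = fun i => (a1 - Cn 3 * lam) * u4 i).
  { rewrite HYu4. apply functional_extensionality; intro i. unfold lin4. ring. }
  destruct (Inv (colmat v1 v2 v3 u4) (chain_inj X v1 v2 v3 u4 a0 Ev2 Ev3 Ev4 Hu5 Hnz))
    as [Q [HPQ HQP]].
  exists (colmat v1 v2 v3 u4), Q, a1.
  destruct (conj_nf X Y (colmat v1 v2 v3 u4) Q (Ydiag a1 lam) Nshift HPQ HQP
     (colmat_X X v1 v2 v3 u4 Ev2 Ev3 Ev4 Hu5)
     (colmat_Y Y a1 lam v1 v2 v3 u4 HYv1 HYv2 HYv3 HYv4)) as [R1 [R2 R3]].
  split; [exact HPQ|split; [exact HQP|split; [exact R1|split; [exact R2|]]]].
  rewrite R3. apply trace_Ydiag.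
Qed.

Local Close Scope C_scope.

Theorem core
  (NFall : forall X, codim_ge3 (Sing X) -> exists P P' Q Q' : mat,
    mmul P P' = mid /\ mmul P' P = mid /\ mmul Q Q' = mid /\ mmul Q' Q = mid /\
    (mmul Q (mmul X P) = mid \/ mmul Q (mmul X P) = J3))
  (CUBE : forall X, codim_ge3 (Sing X) -> mpow X 4 = mzero -> exists a b, mpow X 3 a b <> Czero)
  (INV : forall P, (forall u, mapply P u = vzero -> u = vzero) -> exists Q, mmul P Q = mid /\ mmul Q P = mid)
  (c : coef2) (X : mat)
  (Halt : alternating_coef c)
  (Hint : integrable2 (quad_form c))
  (Hdnz : exists a b d z, d_quad c a b d z <> Czero)
  (HX : forall a b d z, d_quad c a b d z = iX_nu X a b d z)
  (Hsing : codim_ge3 (Sing X)) :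
  exists Y : mat,
    let lam := Csub Cone (trace Y) in
    (forall a b z, quad_form c a b z = iY_iX_nu Y X a b z) /\
    lie_lin Y X = (fun i j => Cmul lam (X i j)) /\
    (~ nilpotent X -> lam = Czero /\ trace Y = Cone /\ lie_lin X Y = mzero) /\
    (nilpotent X -> lam <> Czero ->
       exists (P Q : mat) (rho : Cplx),
         mmul P Q = mid /\ mmul Q P = mid /\
         mmul Q (mmul X P) = Nshift /\
         mmul Q (mmul Y P) = Ydiag rho lam /\
         Csub (Cmul (RtoC 4) rho) (Cmul (RtoC 5) lam) = Cone).
Proof.
  pose proof (ixeta c X Hint HX) as Hix.
  destruct (partB c X Halt Hix (NFall X Hsing)) as [Y HY].
  exists Y. intro lam.
  pose proof (partC c X Y HY HX) as HW.
  pose proof (lie_of_W X Y HW) as Hlie. fold lam in Hlie.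
  assert (Nil : lam <> Czero -> mpow X 4 = mzero).
  { intro Hl. apply CH4. apply (pow_trace_zero X Y lam Hlie Hl). }
  split; [exact HY|split; [exact Hlie|split]].
  - intro Hn. assert (Hl0 : lam = Czero).
    { apply NNPP. intro Hl. apply Hn. exists 4%nat. apply Nil. exact Hl. }
    split; [exact Hl0|split].
    + transitivity (Csub Cone lam); [unfold lam; ring|]. rewrite Hl0. ring.
    + apply functional_extensionality; intro i; apply functional_extensionality; intro j.
      assert (E : lie_lin Y X i j = Cmul lam (X i j)) by (rewrite Hlie; reflexivity).
      rewrite Hl0 in E. unfold lie_lin in *. unfold mzero.
      transitivity (Copp (Csub (mmul X Y i j) (mmul Y X i j))); [ring|]. rewrite E. ring.
  - intros _ Hl.
    destruct (partE X Y lam Hlie Hl (Nil Hl) (CUBE X Hsing (Nil Hl)) INV) as [P [Q [rho [H1 [H2 [H3 [H4 H5]]]]]]].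
    exists P, Q, rho. split; [exact H1|split; [exact H2|split; [exact H3|split; [exact H4|]]]].
    assert (E4 : RtoC 4 = Cn 4).
    { rewrite Cn_RtoC. f_equal. simpl. lra. }
    assert (E5 : RtoC 5 = Cn 5).
    { rewrite Cn_RtoC. f_equal. simpl. lra. }
    rewrite E4, E5.
    assert (Hlam : lam = Csub Cone (trace Y)) by reflexivity.
    rewrite H5 in Hlam.
    transitivity (Cadd Cone (Csub lam (Csub Cone (Csub (Cmul (Cn 4) rho) (Cmul (Cn 6) lam))))).
    { cbn [Cn]. ring. }
    rewrite <- Hlam. ring.
Qed.

From HB Require Import structures.
From mathcomp Require Import all_boot all_order all_algebra.
From mathcomp Require Import Rstruct.
From mathcomp Require Import complex.
From mathcomp Require Import zify.
Import Order.TTheory GRing.Theory Num.Theory.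
Local Open Scope ring_scope.

Definition F := complex R.
Definition toF (x : Cplx) : F := Complex (fst x) (snd x).
Definition ofF (z : F) : Cplx := let: Complex a b := z in (a, b).
Lemma toF_add x y : toF (Cadd x y) = (toF x + toF y).
Proof. destruct x, y. reflexivity. Qed.
Lemma toF_mul x y : toF (Cmul x y) = (toF x * toF y).
Proof. destruct x, y. reflexivity. Qed.
Lemma toF_opp x : toF (Copp x) = - toF x.
Proof. destruct x. reflexivity. Qed.
Lemma toF_one : toF Cone = 1. Proof. reflexivity. Qed.
Lemma toF_zero : toF Czero = 0. Proof. reflexivity. Qed.
Lemma toFK x : ofF (toF x) = x. Proof. destruct x; reflexivity. Qed.
Lemma ofFK z : toF (ofF z) = z. Proof. destruct z; reflexivity. Qed.
Lemma toF_inj x y : toF x = toF y -> x = y.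
Proof. intros H. rewrite <- (toFK x), <- (toFK y), H. reflexivity. Qed.

Definition i4of (i : 'I_4) : I4 :=
  match nat_of_ord i with 0 => i0 | 1 => i1 | 2 => i2 | _ => i3 end%N.
Definition ordof (a : I4) : 'I_4 := inord (idx a).
Lemma i4ofK a : i4of (ordof a) = a.
Proof. destruct a; rewrite /i4of /ordof inordK //. Qed.
Lemma ordofK i : ordof (i4of i) = i.
Proof.
  apply/val_inj. rewrite /ordof /i4of /=. case: i => [[|[|[|[|n]]]] Hi] /=; rewrite ?inordK //.
Qed.

Lemma sum4_big (f : 'I_4 -> F) : \sum_(k < 4) f k = f (ordof i0) + f (ordof i1) + f (ordof i2) + f (ordof i3).
Proof.
  rewrite !big_ord_recr big_ord0 /= add0r.
  congr (_ + _ + _ + _); congr f; apply/val_inj; rewrite /= inordK //.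
Qed.
Lemma toF_sum4 (g : I4 -> Cplx) : toF (sum4 g) = \sum_(k < 4) toF (g (i4of k)).
Proof. rewrite sum4_big !i4ofK /sum4 !toF_add. reflexivity. Qed.

(* transposed convention: row vectors *)
Definition toMt (A : mat) : 'M[F]_4 := \matrix_(i, j) toF (A (i4of j) (i4of i)).
Definition ofMt (M : 'M[F]_4) : mat := fun a b => ofF (M (ordof b) (ordof a)).
Lemma toMtK A : ofMt (toMt A) = A.
Proof. apply functional_extensionality; intro a; apply functional_extensionality; intro b.
  rewrite /ofMt /toMt mxE !i4ofK toFK //. Qed.
Lemma ofMtK M : toMt (ofMt M) = M.
Proof. apply/matrixP => i j. rewrite /ofMt /toMt mxE ofFK !ordofK //. Qed.
Lemma toMt_mul A B : toMt (mmul A B) = toMt B *m toMt A.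
Proof.
  apply/matrixP => i j. rewrite /toMt !mxE /mmul toF_sum4.
  apply eq_bigr => k _. rewrite !mxE toF_mul mulrC //.
Qed.
Lemma ofMt_mul M N : ofMt (M *m N) = mmul (ofMt N) (ofMt M).
Proof. rewrite -(ofMtK M) -(ofMtK N) -toMt_mul !toMtK //. Qed.
Lemma toMt_inj A B : toMt A = toMt B -> A = B.
Proof. intros H. rewrite -(toMtK A) -(toMtK B) H //. Qed.
Lemma toMt_mid : toMt mid = 1%:M.
Proof. apply/matrixP => i j. rewrite /toMt !mxE /mid.
  case: i => [[|[|[|[|n]]]] Hi]; case: j => [[|[|[|[|m]]]] Hj] //=. Qed.

Definition toVr (z : vec) : 'rV[F]_4 := \row_j toF (z (i4of j)).
Definition ofVr (u : 'rV[F]_4) : vec := fun a => ofF (u 0 (ordof a)).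
Lemma ofVrK u : toVr (ofVr u) = u.
Proof. apply/matrixP => i j. rewrite /toVr /ofVr mxE ofFK ordofK. by rewrite (ord1 i). Qed.
Lemma toVrK z : ofVr (toVr z) = z.
Proof. apply functional_extensionality => a. rewrite /toVr /ofVr mxE i4ofK toFK //. Qed.
Lemma toVr_mul A z : toVr z *m toMt A = toVr (mapply A z).
Proof.
  apply/matrixP => i j. rewrite /toVr /toMt !mxE /mapply toF_sum4.
  apply eq_bigr => k _. rewrite !mxE toF_mul mulrC //.
Qed.
Lemma toVr_zero : toVr vzero = 0.
Proof. apply/matrixP => i j. rewrite /toVr !mxE //. Qed.

Lemma rank_ge3 X : codim_ge3 (Sing X) -> (3 <= \rank (toMt X))%N.
Proof.
  move=> [w Hw].
  set A := toMt X.
  have sub : (kermx A <= toVr w)%MS.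
  { apply/row_subP => i.
    have Hr : row i (kermx A) *m A = 0 by rewrite -row_mul mulmx_ker row0.
    set z := ofVr (row i (kermx A)).
    have Hz : Sing X z.
    { move=> a. apply: toF_inj. rewrite toF_zero.
      have := congr1 (fun M : 'rV[F]_4 => M 0 (ordof a)) Hr.
      rewrite /A -(ofVrK (row i (kermx A))) -/z toVr_mul /toVr !mxE i4ofK //. }
    have [c Hc] := Hw z Hz.
    have -> : row i (kermx A) = toF c *: toVr w.
    { rewrite -(ofVrK (row i (kermx A))) -/z. apply/matrixP => i' j.
      rewrite /toVr !mxE Hc toF_mul //. }
    apply: scalemx_sub. exact: submx_refl. }
  have := mxrankS sub. rewrite mxrank_ker.
  have := rank_leq_row (toVr w). move=> h1 h2.
  have h3 : (4 - \rank A <= 1)%N by apply: leq_trans h2 h1.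
  have h4 : (\rank A <= 4)%N by apply: rank_leq_row.
  move: h3 h4. clear. move: (\rank A) => r. move=> h3 h4. lia.
Qed.

Lemma toMt_J3 : toMt J3 = pid_mx 3.
Proof. apply/matrixP => i j. rewrite /toMt !mxE /J3.
  case: i => [[|[|[|[|n]]]] Hi]; case: j => [[|[|[|[|m]]]] Hj] //=. Qed.

Lemma normal_form X : codim_ge3 (Sing X) ->
  exists P P' Q Q' : mat,
    mmul P P' = mid /\ mmul P' P = mid /\ mmul Q Q' = mid /\ mmul Q' Q = mid /\
    (mmul Q (mmul X P) = mid \/ mmul Q (mmul X P) = J3).
Proof.
  move=> Hs. have Hr := rank_ge3 X Hs.
  set A := toMt X.
  set L := col_ebase A. set U := row_ebase A.
  have HL := col_ebase_unit A. have HU := row_ebase_unit A.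
  have HA := mulmx_ebase A.
  exists (ofMt (invmx L)), (ofMt L), (ofMt (invmx U)), (ofMt U).
  split; [|split; [|split; [|split]]].
  - apply: toMt_inj. by rewrite toMt_mul !ofMtK mulmxV // toMt_mid.
  - apply: toMt_inj. by rewrite toMt_mul !ofMtK mulVmx // toMt_mid.
  - apply: toMt_inj. by rewrite toMt_mul !ofMtK mulmxV // toMt_mid.
  - apply: toMt_inj. by rewrite toMt_mul !ofMtK mulVmx // toMt_mid.
  - have E : toMt (mmul (ofMt (invmx U)) (mmul X (ofMt (invmx L)))) = pid_mx (\rank A).
    { rewrite !toMt_mul !ofMtK -/A -{1}HA.
      rewrite !mulmxA mulVmx // mul1mx -mulmxA mulmxV // mulmx1 //. }
    have : (\rank A = 3 \/ \rank A = 4)%N.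
    { have := rank_leq_row A. move: Hr. rewrite -/A. move: (\rank A) => r. lia. }
    case=> Hrk; rewrite Hrk in E.
    + right. apply: toMt_inj. by rewrite E toMt_J3.
    + left. apply: toMt_inj. by rewrite E pid_mx_1 toMt_mid.
Qed.

Lemma toMt_pow X n : toMt (mpow X n) = (toMt X) ^+ n.
Proof.
  elim: n => [|n IH] /=.
  - by rewrite toMt_mid expr0.
  - by rewrite toMt_mul IH exprSr mulmxE.
Qed.

Lemma toMt_zero : toMt mzero = 0.
Proof. apply/matrixP => i j. rewrite /toMt !mxE //. Qed.

Lemma cube_nz X : codim_ge3 (Sing X) -> mpow X 4 = mzero ->
  exists a b, mpow X 3 a b <> Czero.
Proof.
  move=> Hs H4. have Hr := rank_ge3 X Hs.
  set A := toMt X.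
  have A4 : A ^+ 4 = 0 by rewrite /A -toMt_pow H4 toMt_zero.
  have R2 := mxrank_mul_min A A. have R3 := mxrank_mul_min (A *m A) A.
  have R4 := mxrank_mul_min (A *m A *m A) A.
  have E4 : A *m A *m A *m A = 0 by rewrite -A4 !exprSr expr0 mul1r !mulmxE.
  rewrite E4 mxrank0 in R4.
  have h := rank_leq_row A.
  have h3 : (1 <= \rank (A *m A *m A))%N.
  { move: R2 R3 R4 h Hr. rewrite -/A.
    move: (\rank A) (\rank (A *m A)) (\rank (A *m A *m A)) => r x y. lia. }
  have nz : A *m A *m A != 0 by rewrite -mxrank_eq0 -lt0n.
  have E3 : A *m A *m A = toMt (mpow X 3) by rewrite toMt_pow /A !exprSr expr0 mul1r !mulmxE.
  rewrite E3 in nz.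
  case/matrix0Pn: nz => i [j Hij].
  exists (i4of j), (i4of i). intro Hc. move: Hij. rewrite /toMt mxE Hc toF_zero eqxx //.
Qed.

Lemma inv_of_inj P : (forall u, mapply P u = vzero -> u = vzero) ->
  exists Q, mmul P Q = mid /\ mmul Q P = mid.
Proof.
  move=> Hinj. set A := toMt P.
  have K0 : kermx A = 0.
  { apply/row_matrixP => i. rewrite row0.
    have Hr : row i (kermx A) *m A = 0 by rewrite -row_mul mulmx_ker row0.
    rewrite -(ofVrK (row i (kermx A))) in Hr *.
    rewrite /A toVr_mul in Hr.
    have : mapply P (ofVr (row i (kermx A))) = vzero.
    { apply functional_extensionality => a. apply: toF_inj.
      have := congr1 (fun M : 'rV[F]_4 => M 0 (ordof a)) Hr.
      rewrite /toVr !mxE i4ofK toF_zero //. }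
    move/Hinj => ->. exact: toVr_zero. }
  have HU : A \in unitmx by rewrite -row_free_unit -kermx_eq0 K0.
  exists (ofMt (invmx A)). split.
  - apply: toMt_inj. by rewrite toMt_mul ofMtK mulVmx // toMt_mid.
  - apply: toMt_inj. by rewrite toMt_mul ofMtK mulmxV // toMt_mid.
Qed.

Local Close Scope ring_scope.

Theorem lemma2 (c : coef2) (X : mat)
  (Halt : alternating_coef c)
  (Hint : integrable2 (quad_form c))
  (Hdnz : exists a b d z, d_quad c a b d z <> Czero)
  (HX : forall a b d z, d_quad c a b d z = iX_nu X a b d z)
  (Hsing : codim_ge3 (Sing X)) :
  exists Y : mat,
    let lam := Csub Cone (trace Y) in
    (forall a b z, quad_form c a b z = iY_iX_nu Y X a b z) /\
    lie_lin Y X = (fun i j => Cmul lam (X i j)) /\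
    (~ nilpotent X -> lam = Czero /\ trace Y = Cone /\ lie_lin X Y = mzero) /\
    (nilpotent X -> lam <> Czero ->
       exists (P Q : mat) (rho : Cplx),
         mmul P Q = mid /\ mmul Q P = mid /\
         mmul Q (mmul X P) = Nshift /\
         mmul Q (mmul Y P) = Ydiag rho lam /\
         Csub (Cmul (RtoC 4) rho) (Cmul (RtoC 5) lam) = Cone).
Proof.
  exact (core normal_form cube_nz inv_of_inj c X Halt Hint Hdnz HX Hsing).
Qed.
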